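(* Let $f$ satisfy (f1) and suppose $f_0=+\infty$ and $f_\infty=0$. Then for every $\lambda\in(0,+\infty)$, problem (MO) has two solutions $u^+$ and $u^-$ such that $u^+$ is positive and strictly concave in $(0,1)$ and $u^-$ is negative and strictly convex in $(0,1)$.
   Context: Let $N\ge 1$ be an integer and $f:\mathbb{R}\to\mathbb{R}$ continuous. For $\lambda\ge 0$, problem (MO) is: find $u\in C^2[0,1]$ with $\left((u'(r))^N\right)'=\lambda^N N r^{N-1} f(-u(r))$ for $0<r<1$ and $u'(0)=u(1)=0$. Condition (f1): $f\in C(\mathbb{R},\mathbb{R})$ and $f(s)s^N>0$ for all $s\neq0$. The quantities $f_0,f_\infty\in[0,+\infty]$ are defined by $f_0^N=\lim_{s\to0} f(s)/s^N$ and $f_\infty^N=\lim_{|s|\to+\infty} f(s)/s^N$ (limits assumed to exist in $[0,+\infty]$). *)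

(* Defs.v *)
From Stdlib Require Import Reals Lra.
Open Scope R_scope.

Definition cond_f1 (N : nat) (f : R -> R) : Prop :=
  continuity f /\ (forall s : R, s <> 0 -> f s * s ^ N > 0).

Definition f0_infinite (N : nat) (f : R -> R) : Prop :=
  forall M : R, exists d : R, d > 0 /\
    forall s : R, s <> 0 -> Rabs s < d -> f s / s ^ N > M.

Definition finf_zero (N : nat) (f : R -> R) : Prop :=
  forall eps : R, eps > 0 -> exists K : R,
    forall s : R, Rabs s > K -> Rabs (f s / s ^ N) < eps.

Definition C2_on01 (u u1 u2 : R -> R) : Prop :=
  (forall r, 0 <= r <= 1 -> derivable_pt_lim u r (u1 r)) /\
  (forall r, 0 <= r <= 1 -> derivable_pt_lim u1 r (u2 r)) /\
  (forall r, 0 <= r <= 1 -> forall eps, eps > 0 -> exists d, d > 0 /\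
     forall s, 0 <= s <= 1 -> Rabs (s - r) < d -> Rabs (u2 s - u2 r) < eps).

Definition solves_MO (N : nat) (f : R -> R) (lam : R) (u : R -> R) : Prop :=
  exists u1 u2 : R -> R,
    C2_on01 u u1 u2 /\
    (forall r, 0 < r < 1 ->
       derivable_pt_lim (fun s => (u1 s) ^ N) r
         (lam ^ N * INR N * r ^ (N - 1) * f (- u r))) /\
    u1 0 = 0 /\ u 1 = 0.

Definition strictly_concave_01 (u : R -> R) : Prop :=
  forall x y t, 0 < x < 1 -> 0 < y < 1 -> x <> y -> 0 < t < 1 ->
    u (t * x + (1 - t) * y) > t * u x + (1 - t) * u y.

Definition strictly_convex_01 (u : R -> R) : Prop :=
  forall x y t, 0 < x < 1 -> 0 < y < 1 -> x <> y -> 0 < t < 1 ->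
    u (t * x + (1 - t) * y) < t * u x + (1 - t) * u y.

(* Main.v *)
Require Import Defs.
From Stdlib Require Import Reals Lra Lia Ranalysis5 ClassicalEpsilon.
From Coquelicot Require Import Coquelicot.
Open Scope R_scope.


Lemma cont_pt_intro (f : R -> R) x0 :
  (forall eps, eps > 0 -> exists d, d > 0 /\ forall x, Rabs (x - x0) < d -> Rabs (f x - f x0) < eps) ->
  continuity_pt f x0.
Proof.
  intros H eps Heps. destruct (H eps Heps) as [d [Hd Hx]].
  exists d; split; [lra|]. intros x [_ Hx1]. unfold R_dist in *. apply Hx. exact Hx1.
Qed.

Lemma cont_pt_elim (f : R -> R) x0 : continuity_pt f x0 ->
  forall eps, eps > 0 -> exists d, d > 0 /\ forall x, Rabs (x - x0) < d -> Rabs (f x - f x0) < eps.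
Proof.
  intros H eps Heps. destruct (H eps Heps) as [d [Hd Hx]].
  exists d; split; [lra|]. intros x Hx1.
  destruct (Req_dec x0 x) as [<-|Hne]. rewrite Rminus_eq_0, Rabs_R0; lra.
  apply (Hx x). split; [split; [exact I|auto]|]. exact Hx1.
Qed.

Lemma lip_comp_cont (h g : R -> R) x0 :
  (forall a b, Rabs (h a - h b) <= Rabs (a - b)) -> continuity_pt g x0 ->
  continuity_pt (fun x => h (g x)) x0.
Proof.
  intros Hh Hg. apply cont_pt_intro. intros eps Heps.
  destruct (cont_pt_elim g x0 Hg eps Heps) as [d [Hd H]]. exists d; split; auto.
  intros x Hx. eapply Rle_lt_trans; [apply Hh|]. apply H; auto.
Qed.

Lemma cont_to_coq f x : continuity_pt f x -> continuous f x.
Proof. intros H. apply continuity_pt_filterlim. exact H. Qed.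
Lemma coq_to_cont f x : continuous f x -> continuity_pt f x.
Proof. intros H. apply continuity_pt_filterlim. exact H. Qed.

Definition clamp (x : R) : R := Rmax (-2) (Rmin 2 x).

Lemma clamp_lip a b : Rabs (clamp a - clamp b) <= Rabs (a - b).
Proof.
  unfold clamp, Rmax, Rmin.
  repeat destruct Rle_dec; unfold Rabs; repeat destruct Rcase_abs; lra.
Qed.

Lemma clamp_id x : -2 <= x <= 2 -> clamp x = x.
Proof. intros H. unfold clamp, Rmax, Rmin. repeat destruct Rle_dec; lra. Qed.

Lemma clamp_bnd x : -2 <= clamp x <= 2.
Proof. unfold clamp, Rmax, Rmin. repeat destruct Rle_dec; lra. Qed.

Lemma clamp_opp x : clamp (- x) = - clamp x.
Proof. unfold clamp, Rmax, Rmin. repeat destruct Rle_dec; lra. Qed.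

Lemma clamp_cont x : continuity_pt clamp x.
Proof.
  apply (lip_comp_cont clamp (fun y => y)). apply clamp_lip. apply continuity_pt_id.
Qed.

Lemma max0_lip a b : Rabs (Rmax 0 a - Rmax 0 b) <= Rabs (a - b).
Proof. unfold Rmax. repeat destruct Rle_dec; unfold Rabs; repeat destruct Rcase_abs; lra. Qed.

Lemma abs_lip a b : Rabs (Rabs a - Rabs b) <= Rabs (a - b).
Proof. apply Rabs_triang_inv2. Qed.

Lemma pow_cont n x : continuity_pt (fun t => t ^ n) x.
Proof. apply derivable_continuous_pt. apply derivable_pt_pow. Qed.

Lemma exp_cont x : continuity_pt exp x.
Proof. apply derivable_continuous_pt. apply derivable_pt_exp. Qed.

Lemma ln_cont x : 0 < x -> continuity_pt ln x.
Proof.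
  intros Hx. apply derivable_continuous_pt. exists (/ x). apply derivable_pt_lim_ln; auto.
Qed.

Definition Avk (k H : R -> R) (eta : R) : R := RInt (fun t => k t * H (eta * t)) 0 1.

Lemma ex_RInt01 (F : R -> R) : (forall t, 0 <= t <= 1 -> continuity_pt F t) -> ex_RInt F 0 1.
Proof.
  intros H. apply (@ex_RInt_continuous R_CompleteNormedModule). intros z Hz.
  rewrite Rmin_left in Hz by lra. rewrite Rmax_right in Hz by lra.
  apply cont_to_coq. apply H; auto.
Qed.

Lemma integrand_cont (k H : R -> R) eta t :
  continuity_pt k t -> continuity_pt H (eta * t) -> continuity_pt (fun t => k t * H (eta * t)) t.
Proof.
  intros Hk HH. apply continuity_pt_mult; auto.
  apply (continuity_pt_comp (fun t => eta * t) H).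
  apply continuity_pt_mult. apply continuity_pt_const; intros a b; auto. apply continuity_pt_id.
  exact HH.
Qed.

Lemma ex_RInt_Avk (k H : R -> R) eta :
  (forall t, continuity_pt k t) -> (forall x, continuity_pt H x) ->
  ex_RInt (fun t => k t * H (eta * t)) 0 1.
Proof.
  intros Hk HH. apply ex_RInt01. intros t _. apply integrand_cont; auto.
Qed.

Lemma RInt_abs_bound (F : R -> R) M :
  ex_RInt F 0 1 -> (forall t, 0 <= t <= 1 -> Rabs (F t) <= M) -> Rabs (RInt F 0 1) <= M.
Proof.
  intros Hex Hb. replace M with ((1 - 0) * M) by ring.
  apply abs_RInt_le_const; auto. lra.
Qed.

Lemma RInt_le01 (F G : R -> R) :
  ex_RInt F 0 1 -> ex_RInt G 0 1 -> (forall t, 0 <= t <= 1 -> F t <= G t) ->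
  RInt F 0 1 <= RInt G 0 1.
Proof. intros. apply RInt_le; auto. lra. intros; apply H1; lra. Qed.

Lemma RInt_minus01 (F G : R -> R) :
  ex_RInt F 0 1 -> ex_RInt G 0 1 -> RInt (fun t => F t - G t) 0 1 = RInt F 0 1 - RInt G 0 1.
Proof.
  intros HF HG. pose proof (RInt_minus F G 0 1 HF HG) as E. exact E.
Qed.

Lemma Avk_cont (k H : R -> R) eta0 :
  (forall t, continuity_pt k t) -> (forall t, 0 <= t <= 1 -> Rabs (k t) <= 1) ->
  (forall x, continuity_pt H x) -> continuity_pt (Avk k H) eta0.
Proof.
  intros Hk Hk1 HH. apply cont_pt_intro. intros eps Heps.
  set (B := Rabs eta0 + 1).
  assert (HU := Heine H (fun c => -B <= c <= B) (compact_P3 (-B) B) (fun x _ => HH x)).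
  destruct (HU (mkposreal (eps/2) ltac:(lra))) as [[del Hdel] Hud]. simpl in Hud.
  exists (Rmin del 1). split. apply Rmin_pos; lra.
  intros eta Heta. unfold Avk.
  rewrite <- RInt_minus01 by (apply ex_RInt_Avk; auto).
  eapply Rle_lt_trans. apply RInt_abs_bound with (M := eps/2).
  apply ex_RInt01. intros t _. apply continuity_pt_minus; apply integrand_cont; auto.
  intros t Ht. rewrite <- Rmult_minus_distr_l, Rabs_mult.
  assert (Hm1 : Rabs (eta - eta0) < del) by (eapply Rlt_le_trans; [apply Heta| apply Rmin_l]).
  assert (Hm2 : Rabs (eta - eta0) < 1) by (eapply Rlt_le_trans; [apply Heta| apply Rmin_r]).
  assert (Hb1 : Rabs (eta * t) <= B).
  { rewrite Rabs_mult. rewrite (Rabs_right t) by lra. unfold B.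
    assert (Rabs eta <= Rabs eta0 + 1).
    { replace eta with (eta0 + (eta - eta0)) by ring. eapply Rle_trans. apply Rabs_triang. lra. }
    assert (0 <= Rabs eta) by apply Rabs_pos. nra. }
  assert (Hb2 : Rabs (eta0 * t) <= B).
  { rewrite Rabs_mult. rewrite (Rabs_right t) by lra. unfold B.
    assert (0 <= Rabs eta0) by apply Rabs_pos. nra. }
  assert (Hd : Rabs (eta * t - eta0 * t) < del).
  { replace (eta * t - eta0 * t) with ((eta - eta0) * t) by ring. rewrite Rabs_mult.
    rewrite (Rabs_right t) by lra. assert (0 <= Rabs (eta - eta0)) by apply Rabs_pos. nra. }
  assert (Hc : Rabs (H (eta * t) - H (eta0 * t)) < eps/2).
  { apply Hud; auto; apply Rabs_le_between; auto. }
  assert (0 <= Rabs (k t)) by apply Rabs_pos. specialize (Hk1 t Ht).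
  assert (0 <= Rabs (H (eta * t) - H (eta0 * t))) by apply Rabs_pos. nra.
  lra.
Qed.

Lemma exp_le_exp x y : x <= y -> exp x <= exp y.
Proof. intros H. destruct H as [H|H]. left; apply exp_increasing; auto. subst; lra. Qed.


Definition qq (q : R -> R) (x : R) : R := Rmax 0 (q (Rabs x)).
Definition Qf (q : R -> R) (a th : R) : R := qq q (a * (1 - th ^ 2)).
Definition Hf (n : nat) (q : R -> R) (a : R) (psi : R -> R) (th : R) : R :=
  exp (INR (n - 1) * psi th) * Qf q a th.
Definition cW (n : nat) (lam a : R) : R := 2 * a * INR (n + 1) * lam ^ n.
Definition Wf (n : nat) (lam : R) (q : R -> R) (a : R) (psi : R -> R) (eta : R) : R :=
  cW n lam a * Avk (fun t => t ^ n) (Hf n q a psi) (clamp eta).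
Definition Gof (n : nat) (W : R -> R) (th : R) : R := exp (- ln (W th) / INR (n + 1)).
Definition PhiW (n : nat) (a : R) (W : R -> R) (eta : R) : R :=
  2 * a * Avk (fun _ => 1) (Gof n W) eta.
Definition Tf (n : nat) (lam : R) (q : R -> R) (a : R) (psi : R -> R) (eta : R) : R :=
  ln (PhiW n a (Wf n lam q a psi) eta).

Definition qgood (q : R -> R) : Prop :=
  (forall x, continuity_pt q x) /\ (forall x, 0 < x -> 0 < q x).

Lemma qq_cont q x : qgood q -> continuity_pt (qq q) x.
Proof.
  intros [Hq _]. unfold qq. apply (lip_comp_cont (Rmax 0) (fun x => q (Rabs x))).
  apply max0_lip. apply (continuity_pt_comp Rabs q). apply Rcontinuity_abs. apply Hq.
Qed.

Lemma qq_nonneg q x : 0 <= qq q x.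
Proof. unfold qq. apply Rmax_l. Qed.

Lemma qq_pos q x : qgood q -> 0 < x -> qq q x = q x /\ 0 < q x.
Proof.
  intros [_ Hq] Hx. unfold qq. rewrite Rabs_right by lra. specialize (Hq x Hx).
  rewrite Rmax_right by lra. auto.
Qed.

Lemma Qf_cont q a th : qgood q -> continuity_pt (Qf q a) th.
Proof.
  intros Hq. unfold Qf. apply (continuity_pt_comp (fun th => a * (1 - th ^ 2)) (qq q)).
  apply continuity_pt_mult. apply continuity_pt_const; intros u v; auto.
  apply continuity_pt_minus. apply continuity_pt_const; intros u v; auto. apply pow_cont.
  apply qq_cont; auto.
Qed.

Lemma Qf_nonneg q a th : 0 <= Qf q a th.
Proof. apply qq_nonneg. Qed.

Lemma Qf_even q a th : Qf q a (- th) = Qf q a th.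
Proof. unfold Qf. f_equal. f_equal. ring. Qed.

Lemma Hf_cont n q a psi th : qgood q -> (forall x, continuity_pt psi x) -> continuity_pt (Hf n q a psi) th.
Proof.
  intros Hq Hp. unfold Hf. apply continuity_pt_mult; [|apply Qf_cont; auto].
  apply (continuity_pt_comp (fun th => INR (n-1) * psi th) exp).
  apply continuity_pt_mult. apply continuity_pt_const; intros u v; auto. apply Hp. apply exp_cont.
Qed.

Lemma Hf_nonneg n q a psi th : 0 <= Hf n q a psi th.
Proof. unfold Hf. apply Rmult_le_pos. left; apply exp_pos. apply Qf_nonneg. Qed.

Lemma tn_cont n t : continuity_pt (fun t => t ^ n) t.
Proof. apply pow_cont. Qed.

Lemma tn_bnd n t : 0 <= t <= 1 -> Rabs (t ^ n) <= 1.
Proof.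
  intros Ht. rewrite Rabs_right by (apply Rle_ge, pow_le; lra).
  rewrite <- (pow1 n). apply pow_incr; lra.
Qed.

Lemma cW_pos n lam a : 0 < lam -> 0 < a -> 0 < cW n lam a.
Proof.
  intros Hl Ha. unfold cW. apply Rmult_lt_0_compat. apply Rmult_lt_0_compat. lra.
  apply lt_0_INR; lia. apply pow_lt; auto.
Qed.

Lemma Avk_tn_pos n q a psi c :
  qgood q -> 0 < a -> (forall x, continuity_pt psi x) -> -2 <= c <= 2 ->
  0 < Avk (fun t => t ^ n) (Hf n q a psi) c.
Proof.
  intros Hq Ha Hp Hc. unfold Avk.
  assert (Hex : forall u v, ex_RInt (fun t => t ^ n * Hf n q a psi (c * t)) u v).
  { intros u v. apply (@ex_RInt_continuous R_CompleteNormedModule). intros z _.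
    apply cont_to_coq. apply integrand_cont. apply tn_cont. apply Hf_cont; auto. }
  rewrite <- (RInt_Chasles _ 0 (1/2) 1) by auto.
  change (plus ?x ?y) with (x + y).
  assert (0 < RInt (fun t => t ^ n * Hf n q a psi (c * t)) 0 (1/2)).
  { apply RInt_gt_0. lra.
    intros x Hx. apply Rmult_lt_0_compat. apply pow_lt; lra.
    unfold Hf. apply Rmult_lt_0_compat. apply exp_pos. unfold Qf.
    assert (0 < a * (1 - (c * x) ^ 2)).
    { apply Rmult_lt_0_compat; auto. assert ((c*x)^2 < 1).
      { replace ((c*x)^2) with (c^2 * x^2) by ring.
        assert (c^2 <= 4) by nra. assert (x^2 < 1/4) by nra.
        assert (0 <= c^2) by nra. nra. } lra. }
    destruct (qq_pos q _ Hq H) as [-> H2]; auto.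
    intros x _. apply cont_to_coq. apply integrand_cont. apply tn_cont. apply Hf_cont; auto. }
  assert (0 <= RInt (fun t => t ^ n * Hf n q a psi (c * t)) (1/2) 1).
  { apply RInt_ge_0. lra. auto. intros x Hx. apply Rmult_le_pos. apply pow_le; lra. apply Hf_nonneg. }
  lra.
Qed.

Lemma Wf_pos n lam q a psi eta :
  qgood q -> 0 < lam -> 0 < a -> (forall x, continuity_pt psi x) -> 0 < Wf n lam q a psi eta.
Proof.
  intros Hq Hl Ha Hp. unfold Wf. apply Rmult_lt_0_compat. apply cW_pos; auto.
  apply Avk_tn_pos; auto. apply clamp_bnd.
Qed.

Lemma Wf_cont n lam q a psi eta :
  qgood q -> (forall x, continuity_pt psi x) -> continuity_pt (Wf n lam q a psi) eta.
Proof.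
  intros Hq Hp. unfold Wf. apply continuity_pt_mult. apply continuity_pt_const; intros u v; auto.
  apply (continuity_pt_comp clamp). apply clamp_cont.
  apply Avk_cont. apply tn_cont. apply tn_bnd. intros; apply Hf_cont; auto.
Qed.

Lemma Gof_cont n W th : (forall x, continuity_pt W x) -> (forall x, 0 < W x) -> continuity_pt (Gof n W) th.
Proof.
  intros HW Hp. unfold Gof.
  apply (continuity_pt_comp (fun th => - ln (W th) / INR (n+1)) exp); [|apply exp_cont].
  unfold Rdiv. apply continuity_pt_mult; [|apply continuity_pt_const; intros u v; auto].
  apply continuity_pt_opp. apply (continuity_pt_comp W ln). apply HW. apply ln_cont; auto.
Qed.

Lemma PhiW_pos n a W eta : 0 < a -> (forall x, continuity_pt W x) -> (forall x, 0 < W x) -> 0 < PhiW n a W eta.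
Proof.
  intros Ha HW Hp. unfold PhiW, Avk. apply Rmult_lt_0_compat. lra.
  apply RInt_gt_0. lra. intros x _. rewrite Rmult_1_l. apply exp_pos.
  intros x _. apply cont_to_coq. apply integrand_cont. apply continuity_pt_const; intros u v; auto.
  apply Gof_cont; auto.
Qed.

Lemma PhiW_cont n a W eta : (forall x, continuity_pt W x) -> (forall x, 0 < W x) -> continuity_pt (PhiW n a W) eta.
Proof.
  intros HW Hp. unfold PhiW. apply continuity_pt_mult. apply continuity_pt_const; intros u v; auto.
  apply Avk_cont. intros; apply continuity_pt_const; intros u v; auto.
  intros; rewrite Rabs_R1; lra. intros; apply Gof_cont; auto.
Qed.

Lemma Tf_cont n lam q a psi eta : qgood q -> 0 < lam -> 0 < a -> (forall x, continuity_pt psi x) ->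
  continuity_pt (Tf n lam q a psi) eta.
Proof.
  intros Hq Hl Ha Hp. unfold Tf. apply (continuity_pt_comp _ ln).
  apply PhiW_cont. intros; apply Wf_cont; auto. intros; apply Wf_pos; auto.
  apply ln_cont. apply PhiW_pos; auto. intros; apply Wf_cont; auto. intros; apply Wf_pos; auto.
Qed.


Lemma RInt_scal01 (F : R -> R) c : ex_RInt F 0 1 -> RInt (fun t => c * F t) 0 1 = c * RInt F 0 1.
Proof. intros H. exact (RInt_scal F 0 1 c H). Qed.

Lemma ex_RInt_scal01 (F : R -> R) c : ex_RInt F 0 1 -> ex_RInt (fun t => c * F t) 0 1.
Proof. intros H. exact (ex_RInt_scal F 0 1 c H). Qed.

Lemma INR_sub1_nonneg n : 0 <= INR (n - 1).
Proof. apply pos_INR. Qed.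

Lemma Hf_ratio n q a psi1 psi2 k x :
  psi1 x <= psi2 x + k -> Hf n q a psi1 x <= exp (INR (n-1) * k) * Hf n q a psi2 x.
Proof.
  intros H. unfold Hf. rewrite <- Rmult_assoc, <- exp_plus.
  apply Rmult_le_compat_r. apply Qf_nonneg.
  destruct (Req_dec (INR (n-1) * psi1 x) (INR (n - 1) * k + INR (n - 1) * psi2 x)) as [E|E].
  rewrite E; lra. left. apply exp_increasing.
  pose proof (INR_sub1_nonneg n). nra.
Qed.

Lemma Wf_ratio n lam q a psi1 psi2 k :
  qgood q -> 0 < lam -> 0 < a -> (forall x, continuity_pt psi1 x) -> (forall x, continuity_pt psi2 x) ->
  (forall x, -2 <= x <= 2 -> psi1 x <= psi2 x + k) ->
  forall th, Wf n lam q a psi1 th <= exp (INR (n-1) * k) * Wf n lam q a psi2 th.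
Proof.
  intros Hq Hl Ha Hp1 Hp2 H th. unfold Wf.
  assert (HA : Avk (fun t => t ^ n) (Hf n q a psi1) (clamp th) <=
               exp (INR (n-1) * k) * Avk (fun t => t ^ n) (Hf n q a psi2) (clamp th)).
  2:{ assert (0 < cW n lam a) by (apply cW_pos; auto).
      apply Rle_trans with (cW n lam a * (exp (INR (n-1) * k) * Avk (fun t => t ^ n) (Hf n q a psi2) (clamp th))).
      apply Rmult_le_compat_l; lra. right; ring. }
  unfold Avk. rewrite <- RInt_scal01 by (apply ex_RInt_Avk; [apply tn_cont| intros; apply Hf_cont; auto]).
  apply RInt_le01. apply ex_RInt_Avk; [apply tn_cont| intros; apply Hf_cont; auto].
  apply ex_RInt_scal01. apply ex_RInt_Avk; [apply tn_cont| intros; apply Hf_cont; auto].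
  intros t Ht. rewrite <- Rmult_assoc, (Rmult_comm _ (t ^ n)), Rmult_assoc.
  apply Rmult_le_compat_l. apply pow_le; lra. apply Hf_ratio. apply H.
  pose proof (clamp_bnd th). split; nra.
Qed.

Definition Tgen (n : nat) (a : R) (W : R -> R) (eta : R) : R := ln (PhiW n a W eta).

Lemma Gof_ratio n W1 W2 c th : 0 < W1 th -> 0 < W2 th -> W1 th <= exp c * W2 th ->
  exp (- c / INR (n+1)) * Gof n W2 th <= Gof n W1 th.
Proof.
  intros H1 H2 H. unfold Gof. rewrite <- exp_plus.
  assert (ln (W1 th) <= c + ln (W2 th)).
  { rewrite <- (ln_exp c), <- ln_mult by (auto; apply exp_pos). apply ln_le; auto. }
  assert (0 < INR (n+1)) by (apply lt_0_INR; lia).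
  destruct (Req_dec (- c / INR (n + 1) + - ln (W2 th) / INR (n + 1)) (- ln (W1 th) / INR (n + 1))) as [E|E].
  rewrite E; lra. left; apply exp_increasing.
  unfold Rdiv. rewrite <- Rmult_plus_distr_r. apply Rmult_lt_compat_r.
  apply Rinv_0_lt_compat; auto.
  assert (- c + - ln (W2 th) <= - ln (W1 th)) by lra.
  destruct H4; auto. exfalso; apply E. rewrite <- H4. unfold Rdiv; ring.
Qed.

Lemma Tgen_ratio n a W1 W2 c :
  0 < a -> (forall x, continuity_pt W1 x) -> (forall x, continuity_pt W2 x) ->
  (forall x, 0 < W1 x) -> (forall x, 0 < W2 x) ->
  (forall th, W1 th <= exp c * W2 th) ->
  forall eta, Tgen n a W2 eta - c / INR (n+1) <= Tgen n a W1 eta.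
Proof.
  intros Ha HW1 HW2 Hp1 Hp2 H eta. unfold Tgen.
  assert (HP : exp (- c / INR (n+1)) * PhiW n a W2 eta <= PhiW n a W1 eta).
  { unfold PhiW, Avk.
    match goal with |- exp ?c * (?x * ?A) <= ?x * ?B =>
      apply Rle_trans with (x * (exp c * A)); [right; ring|] end.
    apply Rmult_le_compat_l. lra.
    rewrite <- RInt_scal01.
    apply RInt_le01. apply ex_RInt_scal01. apply ex_RInt_Avk.
    intros; apply continuity_pt_const; intros u v; auto. intros; apply Gof_cont; auto.
    apply ex_RInt_Avk. intros; apply continuity_pt_const; intros u v; auto. intros; apply Gof_cont; auto.
    intros t Ht. rewrite !Rmult_1_l. apply Gof_ratio; auto.
    apply ex_RInt_Avk. intros; apply continuity_pt_const; intros u v; auto. intros; apply Gof_cont; auto. }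
  assert (0 < PhiW n a W2 eta) by (apply PhiW_pos; auto).
  assert (ln (exp (- c / INR (n + 1)) * PhiW n a W2 eta) <= ln (PhiW n a W1 eta)).
  { apply ln_le; auto. apply Rmult_lt_0_compat; auto. apply exp_pos. }
  rewrite ln_mult, ln_exp in H1 by (auto; apply exp_pos). unfold Rdiv in *. lra.
Qed.

Definition alpha (n : nat) : R := INR (n - 1) / INR (n + 1).

Lemma alpha_bnd n : 0 <= alpha n < 1.
Proof.
  unfold alpha. assert (0 < INR (n+1)) by (apply lt_0_INR; lia).
  split. apply Rdiv_le_0_compat; auto. apply pos_INR.
  apply Rmult_lt_reg_r with (INR (n+1)); auto. unfold Rdiv. rewrite Rmult_assoc, Rinv_l by lra.
  rewrite Rmult_1_r, Rmult_1_l. apply lt_INR. lia.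
Qed.

Lemma Tf_contract n lam q a psi1 psi2 k :
  qgood q -> 0 < lam -> 0 < a -> (forall x, continuity_pt psi1 x) -> (forall x, continuity_pt psi2 x) ->
  (forall x, -2 <= x <= 2 -> Rabs (psi1 x - psi2 x) <= k) ->
  forall eta, Rabs (Tf n lam q a psi1 eta - Tf n lam q a psi2 eta) <= alpha n * k.
Proof.
  intros Hq Hl Ha Hp1 Hp2 H eta.
  assert (A1 := Wf_ratio n lam q a psi1 psi2 k Hq Hl Ha Hp1 Hp2
    ltac:(intros x Hx; specialize (H x Hx); apply Rabs_le_between in H; lra)).
  assert (A2 := Wf_ratio n lam q a psi2 psi1 k Hq Hl Ha Hp2 Hp1
    ltac:(intros x Hx; specialize (H x Hx); apply Rabs_le_between in H; lra)).
  assert (B1 := Tgen_ratio n a _ _ _ Ha (fun x => Wf_cont n lam q a psi1 x Hq Hp1) (fun x => Wf_cont n lam q a psi2 x Hq Hp2)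
      (fun x => Wf_pos n lam q a psi1 x Hq Hl Ha Hp1) (fun x => Wf_pos n lam q a psi2 x Hq Hl Ha Hp2) A1 eta).
  assert (B2 := Tgen_ratio n a _ _ _ Ha (fun x => Wf_cont n lam q a psi2 x Hq Hp2) (fun x => Wf_cont n lam q a psi1 x Hq Hp1)
      (fun x => Wf_pos n lam q a psi2 x Hq Hl Ha Hp2) (fun x => Wf_pos n lam q a psi1 x Hq Hl Ha Hp1) A2 eta).
  unfold Tgen, Tf in *. unfold alpha. apply Rabs_le_between.
  replace (INR (n - 1) / INR (n + 1) * k) with (INR (n - 1) * k / INR (n + 1)) by (unfold Rdiv; ring).
  lra.
Qed.


Definition contf (p : R -> R) : Prop := forall x, continuity_pt p x.
Definition presT (T : (R -> R) -> (R -> R)) : Prop := forall p, contf p -> contf (T p).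
Definition contrT (T : (R -> R) -> (R -> R)) (al : R) : Prop :=
  forall p1 p2 k, contf p1 -> contf p2 ->
    (forall x, -2 <= x <= 2 -> Rabs (p1 x - p2 x) <= k) ->
    forall x, Rabs (T p1 x - T p2 x) <= al * k.

Fixpoint iterT (T : (R -> R) -> (R -> R)) (j : nat) : R -> R :=
  match j with O => fun _ => 0 | S j => T (iterT T j) end.

Lemma iterT_cont T j : presT T -> contf (iterT T j).
Proof.
  intros HT. induction j; simpl. intros x. apply continuity_pt_const. intros u v; auto.
  apply HT; auto.
Qed.

Lemma pow_small al : 0 <= al < 1 -> forall y, 0 < y -> exists N, al ^ N < y.
Proof.
  intros Hal y Hy. destruct (pow_lt_1_zero al ltac:(rewrite Rabs_right; lra) y Hy) as [N HN].
  exists N. specialize (HN N (le_n N)). rewrite Rabs_right in HN; auto. apply Rle_ge, pow_le; lra.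
Qed.

Lemma abs_small_zero d : (forall eps, 0 < eps -> Rabs d < eps) -> d = 0.
Proof.
  intros H. destruct (Req_dec d 0); auto. exfalso.
  specialize (H (Rabs d) (Rabs_pos_lt d H0)). lra.
Qed.

Lemma fixed_point_exists T al : 0 <= al < 1 -> presT T -> contrT T al ->
  exists psi, contf psi /\ forall x, T psi x = psi x.
Proof.
  intros Hal HP HC.
  set (u := iterT T).
  assert (Hc : forall j, contf (u j)) by (intros; apply iterT_cont; auto).
  destruct (continuity_ab_maj (fun x => Rabs (u 1%nat x - u 0%nat x)) (-2) 2 ltac:(lra)) as [Mx [HMx _]].
  { intros c _. apply (continuity_pt_comp (fun x => u 1%nat x - u 0%nat x) Rabs).
    apply continuity_pt_minus; apply Hc. apply Rcontinuity_abs. }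
  set (K0 := Rabs (u 1%nat Mx - u 0%nat Mx)).
  assert (HK0 : 0 <= K0) by apply Rabs_pos.
  assert (A : forall j x, -2 <= x <= 2 -> Rabs (u (S j) x - u j x) <= al ^ j * K0).
  { induction j; intros x Hx. simpl pow. rewrite Rmult_1_l. apply HMx; auto.
    simpl pow. rewrite Rmult_assoc. exact (HC (u (S j)) (u j) _ (Hc _) (Hc _) IHj x). }
  assert (A' : forall j x, Rabs (u (S (S j)) x - u (S j) x) <= al ^ (S j) * K0).
  { intros j x. simpl pow. rewrite Rmult_assoc. exact (HC (u (S j)) (u j) _ (Hc _) (Hc _) (A j) x). }
  assert (Hal1 : 0 < 1 - al) by lra.
  assert (B : forall j i x, Rabs (u (S j + i)%nat x - u (S j) x) <= K0 * al ^ (S j) * (1 - al ^ i) / (1 - al)).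
  { intros j i x. induction i.
    - rewrite Nat.add_0_r, Rminus_eq_0, Rabs_R0. simpl pow. unfold Rdiv. rewrite Rminus_eq_0. lra.
    - rewrite Nat.add_succ_r.
      eapply Rle_trans. replace (u (S (S j + i)) x - u (S j) x) with
        ((u (S (S j + i)) x - u (S j + i)%nat x) + (u (S j + i)%nat x - u (S j) x)) by ring.
      apply Rabs_triang.
      assert (E := A' (j + i)%nat x).
      assert (Ep : al ^ S (j + i) = al ^ S j * al ^ i) by (rewrite <- pow_add; reflexivity).
      rewrite Ep in E. change (S j + i)%nat with (S (j + i)) in IHi |- *.
      apply Rle_trans with (al ^ S j * al ^ i * K0 + K0 * al ^ S j * (1 - al ^ i) / (1 - al)). lra.
      right. simpl pow. field. lra. }
  set (e := fun j => K0 * al ^ (S j) / (1 - al)).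
  assert (Be : forall j i x, Rabs (u (S j + i)%nat x - u (S j) x) <= e j).
  { intros j i x. eapply Rle_trans. apply B. unfold e. unfold Rdiv.
    apply Rmult_le_compat_r. left; apply Rinv_0_lt_compat; lra.
    assert (0 <= al ^ i) by (apply pow_le; lra). assert (0 <= K0 * al ^ S j) by (apply Rmult_le_pos; auto; apply pow_le; lra).
    nra. }
  assert (He0 : forall j, 0 <= e j).
  { intros j. unfold e. apply Rmult_le_pos. apply Rmult_le_pos; auto. apply pow_le; lra. left; apply Rinv_0_lt_compat; lra. }
  assert (Hesmall : forall eps, 0 < eps -> exists j, e j < eps).
  { intros eps Heps. destruct (pow_small al Hal (eps * (1 - al) / (K0 + 1))) as [j Hj].
    apply Rdiv_lt_0_compat; nra. exists j. unfold e.
    apply Rle_lt_trans with ((K0 + 1) * al ^ j / (1 - al)).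
    unfold Rdiv. apply Rmult_le_compat_r. left; apply Rinv_0_lt_compat; lra.
    simpl pow. assert (0 <= al ^ j) by (apply pow_le; lra).
    assert (0 <= K0 * al ^ j) by (apply Rmult_le_pos; lra).
    apply Rle_trans with (K0 * al ^ j). nra. nra.
    apply Rmult_lt_reg_r with ((1 - al) / (K0 + 1)). apply Rdiv_lt_0_compat; lra.
    replace ((K0 + 1) * al ^ j / (1 - al) * ((1 - al) / (K0 + 1))) with (al ^ j) by (field; lra).
    replace (eps * ((1 - al) / (K0 + 1))) with (eps * (1 - al) / (K0 + 1)) by (field; lra). auto. }
  assert (Hcau : forall x, Cauchy_crit (fun m => u m x)).
  { intros x eps Heps. destruct (Hesmall (eps/2) ltac:(lra)) as [j Hj]. exists (S j).
    intros n m Hn Hm. unfold Rdist.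
    replace n with (S j + (n - S j))%nat by lia. replace m with (S j + (m - S j))%nat by lia.
    replace (u (S j + (n - S j))%nat x - u (S j + (m - S j))%nat x) with
      ((u (S j + (n - S j))%nat x - u (S j) x) - (u (S j + (m - S j))%nat x - u (S j) x)) by ring.
    eapply Rle_lt_trans. apply Rabs_triang. rewrite Rabs_Ropp.
    pose proof (Be j (n - S j)%nat x). pose proof (Be j (m - S j)%nat x). lra. }
  set (psi := fun x => proj1_sig (Rcomplete.R_complete _ (Hcau x))).
  assert (Hlim : forall x, Un_cv (fun m => u m x) (psi x)).
  { intros x. unfold psi. destruct (Rcomplete.R_complete _ (Hcau x)); auto. }
  assert (Hb : forall j x, Rabs (psi x - u (S j) x) <= e j).
  { intros j x. apply le_epsilon. intros eps Heps.
    destruct (Hlim x eps Heps) as [N HN].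
    specialize (HN (S j + N)%nat ltac:(lia)). unfold Rdist in HN.
    pose proof (Be j N x).
    replace (psi x - u (S j) x) with (- (u (S j + N)%nat x - psi x) + (u (S j + N)%nat x - u (S j) x)) by ring.
    eapply Rle_trans. apply Rabs_triang. rewrite Rabs_Ropp. lra. }
  assert (Hpc : contf psi).
  { intros x0. apply cont_pt_intro. intros eps Heps.
    destruct (Hesmall (eps/3) ltac:(lra)) as [j Hj].
    destruct (cont_pt_elim _ x0 (Hc (S j) x0) (eps/3) ltac:(lra)) as [d [Hd Hx]].
    exists d; split; auto. intros x Hx1.
    replace (psi x - psi x0) with ((psi x - u (S j) x) + (u (S j) x - u (S j) x0) - (psi x0 - u (S j) x0)) by ring.
    eapply Rle_lt_trans. apply Rabs_triang. eapply Rle_lt_trans. apply Rplus_le_compat_r. apply Rabs_triang.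
    rewrite Rabs_Ropp. pose proof (Hb j x). pose proof (Hb j x0). pose proof (Hx x Hx1). lra. }
  exists psi. split. exact Hpc.
  - intros x. apply Rminus_diag_uniq. apply abs_small_zero. intros eps Heps.
    destruct (Hesmall (eps/2) ltac:(lra)) as [j Hj].
    assert (H1 : Rabs (T psi x - T (u (S j)) x) <= al * e j).
    { apply HC. exact Hpc. apply Hc. intros y _. rewrite <- Rabs_Ropp. replace (- (psi y - u (S j) y)) with (u (S j) y - psi y) by ring.
      rewrite <- Rabs_Ropp. replace (- (u (S j) y - psi y)) with (psi y - u (S j) y) by ring. apply Hb. }
    pose proof (Hb (S j) x). change (u (S (S j)) x) with (T (u (S j)) x) in H.
    replace (T psi x - psi x) with ((T psi x - T (u (S j)) x) - (psi x - T (u (S j)) x)) by ring.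
    eapply Rle_lt_trans. apply Rabs_triang. rewrite Rabs_Ropp.
    assert (e (S j) = al * e j) by (unfold e; simpl pow; field; lra).
    pose proof (He0 j). nra.
Qed.

Lemma fixed_point_stable T1 T2 al p1 p2 eps : 0 <= al < 1 -> contrT T2 al -> contf p1 -> contf p2 ->
  (forall x, T1 p1 x = p1 x) -> (forall x, T2 p2 x = p2 x) ->
  (forall x, Rabs (T1 p1 x - T2 p1 x) <= eps) ->
  forall x, Rabs (p1 x - p2 x) <= eps / (1 - al).
Proof.
  intros Hal HC H1 H2 F1 F2 He.
  assert (Heps : 0 <= eps) by (eapply Rle_trans; [apply Rabs_pos| apply (He 0)]).
  destruct (continuity_ab_maj (fun x => Rabs (p1 x - p2 x)) (-2) 2 ltac:(lra)) as [Mx [HMx _]].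
  { intros c _. apply (continuity_pt_comp (fun x => p1 x - p2 x) Rabs).
    apply continuity_pt_minus; auto. apply Rcontinuity_abs. }
  set (D0 := Rabs (p1 Mx - p2 Mx)).
  assert (HD0 : 0 <= D0) by apply Rabs_pos.
  assert (Hal1 : 0 < 1 - al) by lra.
  assert (Hee : 0 <= eps / (1 - al)) by (unfold Rdiv; apply Rmult_le_pos; [lra| left; apply Rinv_0_lt_compat; lra]).
  assert (Step : forall k, (forall x, -2 <= x <= 2 -> Rabs (p1 x - p2 x) <= k) ->
                  forall x, Rabs (p1 x - p2 x) <= eps + al * k).
  { intros k Hk x. rewrite <- (F1 x), <- (F2 x).
    replace (T1 p1 x - T2 p2 x) with ((T1 p1 x - T2 p1 x) + (T2 p1 x - T2 p2 x)) by ring.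
    eapply Rle_trans. apply Rabs_triang. pose proof (He x). pose proof (HC p1 p2 k H1 H2 Hk x). lra. }
  assert (Cl : forall j x, Rabs (p1 x - p2 x) <= al ^ j * D0 + eps / (1 - al)).
  { induction j; intros x.
    - assert (forall y, -2 <= y <= 2 -> Rabs (p1 y - p2 y) <= D0) by (intros; apply HMx; auto).
      eapply Rle_trans. apply Step. exact H. simpl pow.
      apply Rle_trans with (eps / (1 - al) + D0). 2: lra.
      assert (eps <= eps / (1 - al)).
      { apply Rmult_le_reg_r with (1 - al); auto. unfold Rdiv. rewrite Rmult_assoc, Rinv_l by lra. nra. }
      nra.
    - eapply Rle_trans. apply Step. intros y _. apply IHj.
      right. simpl pow. field. lra. }
  intros x. apply le_epsilon. intros d Hd.
  destruct (pow_small al Hal (d / (D0 + 1))) as [j Hj]. apply Rdiv_lt_0_compat; lra.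
  eapply Rle_trans. apply (Cl j x).
  assert (al ^ j * D0 <= d).
  { apply Rle_trans with (d / (D0 + 1) * D0). apply Rmult_le_compat_r; lra.
    replace (d / (D0 + 1) * D0) with (d * (D0 / (D0 + 1))) by (field; lra).
    assert (D0 / (D0 + 1) <= 1).
    { apply Rmult_le_reg_r with (D0 + 1). lra. replace (D0 / (D0 + 1) * (D0 + 1)) with D0 by (field; lra). lra. }
    nra. }
  lra.
Qed.


Lemma Tf_pres n lam q a : qgood q -> 0 < lam -> 0 < a -> presT (Tf n lam q a).
Proof. intros Hq Hl Ha p Hp x. apply Tf_cont; auto. Qed.

Lemma Tf_contrT n lam q a : qgood q -> 0 < lam -> 0 < a -> contrT (Tf n lam q a) (alpha n).
Proof. intros Hq Hl Ha p1 p2 k H1 H2 H x. apply Tf_contract; auto. Qed.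

Lemma Tf_fixed_exists n lam q a : qgood q -> 0 < lam -> 0 < a ->
  exists psi, contf psi /\ forall x, Tf n lam q a psi x = psi x.
Proof.
  intros Hq Hl Ha. apply (fixed_point_exists _ (alpha n)). apply alpha_bnd.
  apply Tf_pres; auto. apply Tf_contrT; auto.
Qed.

Definition Iint n q a psi c := Avk (fun t => t ^ n) (Hf n q a psi) c.

Lemma Iint_cont n q a psi c : qgood q -> contf psi -> continuity_pt (Iint n q a psi) c.
Proof. intros Hq Hp. apply Avk_cont. apply tn_cont. apply tn_bnd. intros; apply Hf_cont; auto. Qed.

Lemma Iint_close n q a psi : qgood q -> 0 < a -> contf psi ->
  forall kap, 0 < kap -> exists d, 0 < d /\ forall b, Rabs (b - a) < d -> 0 < b ->
   forall c, -2 <= c <= 2 ->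
     Iint n q b psi c <= exp kap * Iint n q a psi c /\ Iint n q a psi c <= exp kap * Iint n q b psi c.
Proof.
  intros Hq Ha Hp kap Hkap.
  destruct (continuity_ab_min (Iint n q a psi) (-2) 2 ltac:(lra)) as [cm [Hcm Hcm2]].
  { intros; apply Iint_cont; auto. }
  set (m0 := Iint n q a psi cm).
  assert (Hm0 : 0 < m0) by (apply Avk_tn_pos; auto).
  destruct (continuity_ab_maj (fun x => exp (INR (n-1) * psi x)) (-2) 2 ltac:(lra)) as [cM [HcM _]].
  { intros. apply (continuity_pt_comp (fun x => INR (n-1) * psi x) exp).
    apply continuity_pt_mult. apply continuity_pt_const; intros u v; auto. apply Hp. apply exp_cont. }
  set (E := exp (INR (n - 1) * psi cM)).
  assert (HE : 0 < E) by apply exp_pos.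
  set (om := Rmin (m0 / 2) (kap * m0 / 2) / E).
  assert (Hom : 0 < om).
  { unfold om. apply Rdiv_lt_0_compat; auto. apply Rmin_pos; nra. }
  set (L := 3 * (a + 1)).
  assert (HU := Heine (qq q) (fun c => -L <= c <= L) (compact_P3 (-L) L) (fun x _ => qq_cont q x Hq)).
  destruct (HU (mkposreal om Hom)) as [[del Hdel] Hud]. simpl in Hud.
  exists (Rmin 1 (del / 3)). split. apply Rmin_pos; lra.
  intros b Hb Hb0 c Hc.
  assert (Hb1 : Rabs (b - a) < 1) by (eapply Rlt_le_trans; [exact Hb| apply Rmin_l]).
  assert (Hb2 : Rabs (b - a) < del / 3) by (eapply Rlt_le_trans; [exact Hb| apply Rmin_r]).
  apply Rabs_def2 in Hb1.
  assert (Hdiff : Rabs (Iint n q b psi c - Iint n q a psi c) <= E * om).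
  { unfold Iint, Avk. rewrite <- RInt_minus01 by (apply ex_RInt_Avk; [apply tn_cont| intros; apply Hf_cont; auto]).
    apply RInt_abs_bound. apply ex_RInt01. intros t _. apply continuity_pt_minus; apply integrand_cont;
      [apply tn_cont | apply Hf_cont; auto | apply tn_cont | apply Hf_cont; auto].
    intros t Ht. rewrite <- Rmult_minus_distr_l, Rabs_mult. unfold Hf.
    rewrite <- Rmult_minus_distr_l, Rabs_mult.
    assert (Hct : -2 <= c * t <= 2) by (split; nra).
    assert (H1 : Rabs (t ^ n) <= 1) by (apply tn_bnd; auto).
    assert (H2 : Rabs (exp (INR (n - 1) * psi (c * t))) <= E).
    { rewrite Rabs_right by (left; apply exp_pos). apply HcM. auto. }
    assert (H3 : Rabs (Qf q b (c * t) - Qf q a (c * t)) < om).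
    { unfold Qf. set (y := 1 - (c * t) ^ 2).
      assert (Hy : -3 <= y <= 1) by (unfold y; nra).
      apply Hud.
      - split; unfold L; nra.
      - split; unfold L; nra.
      - replace (b * y - a * y) with ((b - a) * y) by ring. rewrite Rabs_mult.
        assert (Rabs y <= 3) by (apply Rabs_le; lra). assert (0 <= Rabs (b - a)) by apply Rabs_pos. nra. }
    assert (0 <= Rabs (t ^ n)) by apply Rabs_pos.
    assert (0 <= Rabs (exp (INR (n - 1) * psi (c * t)))) by apply Rabs_pos.
    assert (0 <= Rabs (Qf q b (c * t) - Qf q a (c * t))) by apply Rabs_pos.
    apply Rle_trans with (1 * (E * om)). 2: lra.
    apply Rmult_le_compat; auto. apply Rmult_le_pos; auto. apply Rmult_le_compat; auto. lra. }
  assert (HEom1 : E * om <= m0 / 2).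
  { unfold om. replace (E * (Rmin (m0 / 2) (kap * m0 / 2) / E)) with (Rmin (m0 / 2) (kap * m0 / 2)) by (field; lra).
    apply Rmin_l. }
  assert (HEom2 : E * om <= kap * m0 / 2).
  { unfold om. replace (E * (Rmin (m0 / 2) (kap * m0 / 2) / E)) with (Rmin (m0 / 2) (kap * m0 / 2)) by (field; lra).
    apply Rmin_r. }
  assert (HIa : m0 <= Iint n q a psi c) by (apply Hcm; auto).
  apply Rabs_le_between in Hdiff.
  pose proof (exp_ineq1_le kap).
  assert (Hb' : m0 / 2 <= Iint n q b psi c) by lra.
  split.
  - apply Rle_trans with ((1 + kap) * Iint n q a psi c). nra.
    apply Rmult_le_compat_r; lra.
  - apply Rle_trans with ((1 + kap) * Iint n q b psi c). nra.
    apply Rmult_le_compat_r; lra.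
Qed.

Lemma cW_ratio n lam a b : 0 < a -> 0 < b -> cW n lam b = exp (ln b - ln a) * cW n lam a.
Proof.
  intros Ha Hb. unfold Rminus. rewrite exp_plus, exp_ln by auto. rewrite exp_Ropp, exp_ln by auto.
  unfold cW. field. lra.
Qed.

Lemma Tf_Tgen n lam q a b psi x : qgood q -> 0 < lam -> contf psi -> 0 < a -> 0 < b ->
  Tf n lam q b psi x = (ln b - ln a) + Tgen n a (Wf n lam q b psi) x.
Proof.
  intros Hq Hl Hp Ha Hb. unfold Tf, Tgen.
  assert (E : PhiW n b (Wf n lam q b psi) x = (b / a) * PhiW n a (Wf n lam q b psi) x)
    by (unfold PhiW; field; lra).
  rewrite E. assert (0 < PhiW n a (Wf n lam q b psi) x).
  { apply PhiW_pos; auto. intros; apply Wf_cont; auto. intros; apply Wf_pos; auto. }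
  rewrite ln_mult by (try apply Rdiv_lt_0_compat; auto). unfold Rdiv.
  rewrite ln_mult by (auto; apply Rinv_0_lt_compat; auto). rewrite ln_Rinv by auto. ring.
Qed.

Lemma Tf_close_a n lam q a psi : qgood q -> 0 < lam -> 0 < a -> contf psi ->
  forall eps, 0 < eps -> exists d, 0 < d /\ forall b, Rabs (b - a) < d -> 0 < b ->
    forall x, Rabs (Tf n lam q a psi x - Tf n lam q b psi x) <= eps.
Proof.
  intros Hq Hl Ha Hp eps Heps.
  destruct (cont_pt_elim ln a (ln_cont a Ha) (eps/3) ltac:(lra)) as [d1 [Hd1 H1]].
  destruct (Iint_close n q a psi Hq Ha Hp (eps/3) ltac:(lra)) as [d2 [Hd2 H2]].
  exists (Rmin d1 d2). split. apply Rmin_pos; auto.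
  intros b Hb Hb0 x.
  assert (Hl1 : Rabs (ln b - ln a) < eps / 3) by (apply H1; eapply Rlt_le_trans; [exact Hb| apply Rmin_l]).
  assert (HI := H2 b ltac:(eapply Rlt_le_trans; [exact Hb| apply Rmin_r]) Hb0).
  set (c1 := Rabs (ln b - ln a) + eps / 3).
  assert (HW1 : forall th, Wf n lam q b psi th <= exp c1 * Wf n lam q a psi th).
  { intros th. unfold Wf. rewrite (cW_ratio n lam a b) by auto.
    destruct (HI (clamp th) (clamp_bnd th)) as [I1 _].
    assert (0 < cW n lam a) by (apply cW_pos; auto).
    apply Rle_trans with (exp (ln b - ln a) * cW n lam a * (exp (eps / 3) * Iint n q a psi (clamp th))).
    apply Rmult_le_compat_l. apply Rmult_le_pos; [left; apply exp_pos|lra]. exact I1.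
    replace (exp (ln b - ln a) * cW n lam a * (exp (eps / 3) * Iint n q a psi (clamp th))) with
      (exp (ln b - ln a + eps / 3) * (cW n lam a * Iint n q a psi (clamp th))) by (rewrite exp_plus; ring).
    apply Rmult_le_compat_r. left; apply Rmult_lt_0_compat; auto. apply Avk_tn_pos; auto. apply clamp_bnd.
    apply exp_le_exp. unfold c1. pose proof (Rle_abs (ln b - ln a)). lra. }
  assert (HW2 : forall th, Wf n lam q a psi th <= exp c1 * Wf n lam q b psi th).
  { intros th. unfold Wf. rewrite (cW_ratio n lam a b) by auto.
    destruct (HI (clamp th) (clamp_bnd th)) as [_ I2].
    assert (0 < cW n lam a) by (apply cW_pos; auto).
    apply Rle_trans with (cW n lam a * (exp (eps / 3) * Iint n q b psi (clamp th))).
    apply Rmult_le_compat_l. lra. exact I2.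
    replace (cW n lam a * (exp (eps / 3) * Iint n q b psi (clamp th))) with
      (exp (- (ln b - ln a) + eps / 3) * (exp (ln b - ln a) * cW n lam a * Iint n q b psi (clamp th))).
    2:{ rewrite exp_plus. rewrite exp_Ropp. field. apply Rgt_not_eq, exp_pos. }
    apply Rmult_le_compat_r. left; apply Rmult_lt_0_compat. apply Rmult_lt_0_compat; auto. apply exp_pos.
    apply Avk_tn_pos; auto. apply clamp_bnd.
    apply exp_le_exp. unfold c1. pose proof (Rle_abs (- (ln b - ln a))). rewrite Rabs_Ropp in *. lra. }
  assert (Wc : forall bb, 0 < bb -> forall y, continuity_pt (Wf n lam q bb psi) y) by (intros; apply Wf_cont; auto).
  assert (Wp : forall bb, 0 < bb -> forall y, 0 < Wf n lam q bb psi y) by (intros; apply Wf_pos; auto).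
  assert (B1 := Tgen_ratio n a _ _ _ Ha (Wc b Hb0) (Wc a Ha) (Wp b Hb0) (Wp a Ha) HW1 x).
  assert (B2 := Tgen_ratio n a _ _ _ Ha (Wc a Ha) (Wc b Hb0) (Wp a Ha) (Wp b Hb0) HW2 x).
  rewrite (Tf_Tgen n lam q a b psi x) by auto.
  assert (Ea : Tf n lam q a psi x = Tgen n a (Wf n lam q a psi) x) by reflexivity.
  rewrite Ea.
  assert (0 < INR (n + 1)) by (apply lt_0_INR; lia).
  assert (1 <= INR (n + 1)) by (rewrite plus_INR; simpl; pose proof (pos_INR n); lra).
  assert (0 <= c1) by (unfold c1; pose proof (Rabs_pos (ln b - ln a)); lra).
  assert (c1 / INR (n + 1) <= c1).
  { unfold Rdiv. apply Rle_trans with (c1 * 1). apply Rmult_le_compat_l; auto.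
    rewrite <- Rinv_1. apply Rinv_le_contravar; lra. lra. }
  apply Rabs_le_between. pose proof (Rabs_def2 _ _ Hl1). unfold c1 in *.
  pose proof (Rle_abs (ln b - ln a)). pose proof (Rle_abs (- (ln b - ln a))). rewrite Rabs_Ropp in *.
  split; lra.
Qed.


Definition psiA (n : nat) (lam : R) (q : R -> R) (a : R) : R -> R :=
  epsilon (inhabits (fun _ : R => 0)) (fun psi => contf psi /\ forall x, Tf n lam q a psi x = psi x).

Lemma psiA_spec n lam q a : qgood q -> 0 < lam -> 0 < a ->
  contf (psiA n lam q a) /\ forall x, Tf n lam q a (psiA n lam q a) x = psiA n lam q a x.
Proof.
  intros Hq Hl Ha. unfold psiA. apply epsilon_spec. apply Tf_fixed_exists; auto.
Qed.

Lemma psiA_cont_a n lam q x a0 : qgood q -> 0 < lam -> 0 < a0 ->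
  continuity_pt (fun a => psiA n lam q a x) a0.
Proof.
  intros Hq Hl Ha0. apply cont_pt_intro. intros eps Heps.
  destruct (alpha_bnd n) as [Hal0 Hal1].
  destruct (psiA_spec n lam q a0 Hq Hl Ha0) as [Hc0 Hf0].
  destruct (Tf_close_a n lam q a0 (psiA n lam q a0) Hq Hl Ha0 Hc0 (eps * (1 - alpha n) / 2)) as [d [Hd H]].
  { apply Rdiv_lt_0_compat; nra. }
  exists (Rmin d a0). split. apply Rmin_pos; auto.
  intros b Hb.
  assert (Hb1 : Rabs (b - a0) < d) by (eapply Rlt_le_trans; [exact Hb| apply Rmin_l]).
  assert (Hb2 : Rabs (b - a0) < a0) by (eapply Rlt_le_trans; [exact Hb| apply Rmin_r]).
  assert (Hb0 : 0 < b) by (apply Rabs_def2 in Hb2; lra).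
  destruct (psiA_spec n lam q b Hq Hl Hb0) as [Hcb Hfb].
  assert (S := fixed_point_stable (Tf n lam q a0) (Tf n lam q b) (alpha n) _ _ _ (alpha_bnd n)
     (Tf_contrT n lam q b Hq Hl Hb0) Hc0 Hcb Hf0 Hfb (H b Hb1 Hb0) x).
  rewrite Rabs_minus_sym. eapply Rle_lt_trans. exact S.
  replace (eps * (1 - alpha n) / 2 / (1 - alpha n)) with (eps / 2) by (field; lra). lra.
Qed.


Lemma dmult (f g : R -> R) (x a b : R) : is_derive f x a -> is_derive g x b ->
  is_derive (fun t => f t * g t) x (a * g x + f x * b).
Proof. intros H1 H2. apply (is_derive_mult f g x a b H1 H2). intros; apply Rmult_comm. Qed.

Lemma dcomp (f g : R -> R) x a b : is_derive f (g x) a -> is_derive g x b ->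
  is_derive (fun t => f (g t)) x (b * a).
Proof. intros H1 H2. apply (is_derive_comp f g x a b H1 H2). Qed.

Lemma dplus (f g : R -> R) x a b : is_derive f x a -> is_derive g x b ->
  is_derive (fun t => f t + g t) x (a + b).
Proof. intros H1 H2. apply (is_derive_plus f g x a b H1 H2). Qed.

Lemma dminus (f g : R -> R) x a b : is_derive f x a -> is_derive g x b ->
  is_derive (fun t => f t - g t) x (a - b).
Proof. intros H1 H2. apply (is_derive_minus f g x a b H1 H2). Qed.

Lemma dconst (c x : R) : is_derive (fun _ => c) x 0.
Proof. apply (is_derive_const c x). Qed.

Lemma did (x : R) : is_derive (fun t => t) x 1.
Proof. apply (is_derive_id x). Qed.

Lemma dscal (f : R -> R) (x k a : R) : is_derive f x a -> is_derive (fun t => k * f t) x (k * a).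
Proof. apply is_derive_scal. Qed.

Lemma dexp (f : R -> R) x a : is_derive f x a -> is_derive (fun t => exp (f t)) x (a * exp (f x)).
Proof. intros H. apply (dcomp exp f x). apply is_derive_exp. auto. Qed.

Lemma dln (f : R -> R) x a : 0 < f x -> is_derive f x a -> is_derive (fun t => ln (f t)) x (a / f x).
Proof. intros Hp H. unfold Rdiv. apply (dcomp ln f x). apply is_derive_ln; auto. auto. Qed.

Lemma ddiv (f g : R -> R) x a b : is_derive f x a -> is_derive g x b -> g x <> 0 ->
  is_derive (fun t => f t / g t) x ((a * g x - f x * b) / g x ^ 2).
Proof. apply is_derive_div. Qed.

Lemma dpow (f : R -> R) (k : nat) x a : is_derive f x a ->
  is_derive (fun t => f t ^ k) x (INR k * a * f x ^ Init.Nat.pred k).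
Proof. apply is_derive_pow. Qed.

Lemma deq (f : R -> R) (x a b : R) : is_derive f x a -> a = b -> is_derive f x b.
Proof. intros H ->; auto. Qed.

Lemma dext (f g : R -> R) (x a : R) : (forall t, f t = g t) -> is_derive f x a -> is_derive g x a.
Proof. apply is_derive_ext. Qed.

Lemma dext_loc (f g : R -> R) x a d : 0 < d -> (forall t, Rabs (t - x) < d -> f t = g t) ->
  is_derive f x a -> is_derive g x a.
Proof.
  intros Hd H. apply is_derive_ext_loc. exists (mkposreal d Hd). intros y Hy. apply H. exact Hy.
Qed.

Lemma to_dpl (f : R -> R) (x a : R) : is_derive f x a -> derivable_pt_lim f x a.
Proof. apply is_derive_Reals. Qed.

Lemma from_dpl (f : R -> R) (x a : R) : derivable_pt_lim f x a -> is_derive f x a.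
Proof. apply is_derive_Reals. Qed.

Lemma dcont (f : R -> R) (x a : R) : is_derive f x a -> continuity_pt f x.
Proof. intros H. apply coq_to_cont. apply (ex_derive_continuous f x). exists a; auto. Qed.

Lemma ftc0 (G : R -> R) y : (forall x, continuity_pt G x) -> is_derive (fun z => RInt G 0 z) y (G y).
Proof.
  intros HG. apply (is_derive_RInt G (fun z => RInt G 0 z) 0 y).
  exists (mkposreal 1 Rlt_0_1). intros b _. apply (@RInt_correct R_CompleteNormedModule).
  apply (@ex_RInt_continuous R_CompleteNormedModule). intros; apply cont_to_coq; auto.
  apply cont_to_coq; auto.
Qed.

Lemma subst_lin (H : R -> R) y : (forall x, continuity_pt H x) ->
  y * RInt (fun t => H (y * t)) 0 1 = RInt H 0 y.
Proof.
  intros HH.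
  assert (E := RInt_comp_lin H y 0 0 1).
  replace (y * 0 + 0) with 0 in E by ring. replace (y * 1 + 0) with y in E by ring.
  rewrite <- E. 2:{ apply (@ex_RInt_continuous R_CompleteNormedModule). intros; apply cont_to_coq; auto. }
  assert (E2 := RInt_scal (fun t => H (y * t)) 0 1 y). simpl in E2.
  change (scal y (RInt (fun t : R => H (y * t)) 0 1)) with (y * RInt (fun t : R => H (y * t)) 0 1) in E2.
  rewrite <- E2. apply RInt_ext. intros x _. change (scal y (H (y * x + 0))) with (y * H (y * x + 0)).
  rewrite Rplus_0_r. reflexivity.
  apply ex_RInt01. intros t _. apply (continuity_pt_comp (fun t => y * t) H).
  apply continuity_pt_mult. apply continuity_pt_const; intros u v; auto. apply continuity_pt_id. apply HH.
Qed.

Lemma deriv_from_near (f f' : R -> R) x0 d : 0 < d ->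
  continuity_pt f x0 ->
  (forall x, 0 < Rabs (x - x0) < d -> is_derive f x (f' x)) ->
  continuity_pt f' x0 -> is_derive f x0 (f' x0).
Proof.
  intros Hd Hc Hder Hc'. apply from_dpl. intros eps Heps.
  destruct (cont_pt_elim f' x0 Hc' (eps/2) ltac:(lra)) as [d1 [Hd1 H1]].
  assert (Hm : 0 < Rmin d d1) by (apply Rmin_pos; lra).
  exists (mkposreal _ Hm). intros h Hh0 Hh. simpl in Hh.
  assert (Hhd : Rabs h < d) by (eapply Rlt_le_trans; [exact Hh| apply Rmin_l]).
  assert (Hhd1 : Rabs h < d1) by (eapply Rlt_le_trans; [exact Hh| apply Rmin_r]).
  destruct (MVT_gen f x0 (x0 + h) f') as [c [Hc1 Hc2]].
  - intros x Hx. apply Hder. 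
    assert (Hx' : Rmin x0 (x0 + h) < x < Rmax x0 (x0 + h)) by exact Hx.
    unfold Rmin, Rmax in Hx'. destruct Rle_dec in Hx'; split.
    + rewrite Rabs_right; lra.
    + rewrite Rabs_right; [|lra]. apply Rle_lt_trans with (Rabs h). rewrite Rabs_right; lra. lra.
    + rewrite Rabs_left; lra.
    + rewrite Rabs_left; [|lra]. apply Rle_lt_trans with (Rabs h). rewrite Rabs_left; lra. lra.
  - intros x Hx.
    destruct (Req_dec x x0) as [->|Hne]. auto.
    apply dcont with (f' x). apply Hder.
    unfold Rmin, Rmax in Hx. destruct Rle_dec in Hx; split.
    + apply Rabs_pos_lt. lra.
    + apply Rle_lt_trans with (Rabs h); auto. rewrite !Rabs_right; lra.
    + apply Rabs_pos_lt. lra.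
    + apply Rle_lt_trans with (Rabs h); auto. rewrite Rabs_left1 by lra. rewrite Rabs_left; lra.
  - rewrite Hc2. replace ((f' c * (x0 + h - x0)) / h) with (f' c) by (field; auto).
    apply Rlt_trans with (eps / 2); [|lra]. apply H1.
    unfold Rmin, Rmax in Hc1. destruct Rle_dec in Hc1.
    + apply Rle_lt_trans with (Rabs h); auto. rewrite !Rabs_right; lra.
    + apply Rle_lt_trans with (Rabs h); auto. rewrite Rabs_left1 by lra. rewrite Rabs_left; lra.
Qed.

Lemma MVT_open (f df : R -> R) a b : a < b ->
  (forall x, a <= x <= b -> continuity_pt f x) ->
  (forall x, a < x < b -> is_derive f x (df x)) ->
  exists c, a < c < b /\ f b - f a = df c * (b - a).
Proof.
  intros Hab Hc Hd.
  set (pr1 := fun c (P : a < c < b) => exist (fun l => derivable_pt_lim f c l) (df c) (to_dpl f c (df c) (Hd c P))).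
  set (pr2 := fun c (P : a < c < b) => derivable_pt_id c).
  destruct (MVT f id a b pr1 pr2 Hab Hc (fun c _ => continuity_pt_id c)) as [c [P E]].
  exists c. split; auto. unfold pr1, pr2 in E. simpl in E. rewrite derive_pt_id in E.
  unfold id in E. lra.
Qed.

Lemma mono_deriv (f df : R -> R) a b : a < b ->
  (forall x, a <= x <= b -> continuity_pt f x) ->
  (forall x, a < x < b -> is_derive f x (df x)) ->
  (forall x, a < x < b -> 0 <= df x) -> f a <= f b.
Proof.
  intros Hab Hc Hd Hp. destruct (MVT_open f df a b Hab Hc Hd) as [c [Hc1 E]].
  specialize (Hp c Hc1). nra.
Qed.

Lemma smono_deriv (f df : R -> R) a b : a < b ->
  (forall x, a <= x <= b -> continuity_pt f x) ->
  (forall x, a < x < b -> is_derive f x (df x)) ->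
  (forall x, a < x < b -> 0 < df x) -> f a < f b.
Proof.
  intros Hab Hc Hd Hp. destruct (MVT_open f df a b Hab Hc Hd) as [c [Hc1 E]].
  specialize (Hp c Hc1). nra.
Qed.


Definition FP m lam q a psi : Prop :=
  qgood q /\ 0 < lam /\ 0 < a /\ contf psi /\ (forall x, Tf (S m) lam q a psi x = psi x).

Definition Wd m lam q a psi y := Wf (S m) lam q a psi y.
Definition Ed m lam q a psi y := exp (ln (Wd m lam q a psi y) / INR (S m + 1)).
Definition Gd m lam q a psi y := Gof (S m) (Wd m lam q a psi) y.
Definition rho (psi : R -> R) y := y * exp (psi y).
Definition gg m lam q a psi y := y * Ed m lam q a psi y.
Definition Hd m q a psi y := Hf (S m) q a psi y.
Definition cc m lam a := cW (S m) lam a.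
Definition wI m q a psi y := RInt (fun th => th ^ S m * Hd m q a psi th) 0 y.
Definition dgg m lam q a psi y :=
  cc m lam a / INR (S m + 1) * Ed m lam q a psi y * Hd m q a psi y / Wd m lam q a psi y.

Lemma exp_pow_INR x k : exp x ^ k = exp (INR k * x).
Proof.
  induction k. simpl. rewrite Rmult_0_l, exp_0. auto.
  rewrite <- tech_pow_Rmult, IHk, S_INR, <- exp_plus. f_equal. ring.
Qed.

Lemma INR_Sm1_pos m : 0 < INR (S m + 1).
Proof. apply lt_0_INR. lia. Qed.


Lemma Wd_pos m lam q a psi y : FP m lam q a psi -> 0 < Wd m lam q a psi y.
Proof. intros (Hq & Hl & Ha & Hp & _). apply Wf_pos; auto. Qed.

Lemma Wd_cont m lam q a psi y : FP m lam q a psi -> continuity_pt (Wd m lam q a psi) y.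
Proof. intros (Hq & Hl & Ha & Hp & _). apply Wf_cont; auto. Qed.

Lemma Hd_cont m q a psi y : qgood q -> contf psi -> continuity_pt (Hd m q a psi) y.
Proof. intros Hq Hp. apply Hf_cont; auto. Qed.

Lemma Ed_cont m lam q a psi y : FP m lam q a psi -> continuity_pt (Ed m lam q a psi) y.
Proof.
  intros H. unfold Ed. apply (continuity_pt_comp (fun y => ln (Wd m lam q a psi y) / INR (S m + 1)) exp).
  unfold Rdiv. apply continuity_pt_mult; [|apply continuity_pt_const; intros u v; auto].
  apply (continuity_pt_comp (Wd m lam q a psi) ln). apply Wd_cont; auto. apply ln_cont. apply Wd_pos; auto.
  apply exp_cont.
Qed.

Lemma Gd_cont m lam q a psi y : FP m lam q a psi -> continuity_pt (Gd m lam q a psi) y.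
Proof. intros H. apply Gof_cont; intros; [apply Wd_cont|apply Wd_pos]; auto. Qed.

Lemma Ed_pos m lam q a psi y : 0 < Ed m lam q a psi y.
Proof. apply exp_pos. Qed.
Lemma Gd_pos m lam q a psi y : 0 < Gd m lam q a psi y.
Proof. apply exp_pos. Qed.

Lemma EG m lam q a psi y : Ed m lam q a psi y * Gd m lam q a psi y = 1.
Proof.
  unfold Ed, Gd, Gof. rewrite <- exp_plus. unfold Rdiv. rewrite <- Rmult_plus_distr_r.
  rewrite Rplus_opp_r, Rmult_0_l, exp_0. auto.
Qed.

Lemma Ed_pow m lam q a psi y : FP m lam q a psi -> Ed m lam q a psi y ^ (S (S m)) = Wd m lam q a psi y.
Proof.
  intros H. unfold Ed. rewrite exp_pow_INR.
  replace (INR (S (S m)) * (ln (Wd m lam q a psi y) / INR (S m + 1))) with (ln (Wd m lam q a psi y)).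
  apply exp_ln. apply Wd_pos; auto.
  replace (S m + 1)%nat with (S (S m)) by lia. field. apply not_0_INR. lia.
Qed.

Lemma exp_psi_eq m lam q a psi y : FP m lam q a psi ->
  exp (psi y) = 2 * a * Avk (fun _ => 1) (Gd m lam q a psi) y.
Proof.
  intros H. pose proof H as (Hq & Hl & Ha & Hp & Hf).
  rewrite <- (Hf y). unfold Tf. rewrite exp_ln. reflexivity.
  apply PhiW_pos; auto. intros; apply Wf_cont; auto. intros; apply Wf_pos; auto.
Qed.

Lemma rho_eq m lam q a psi y : FP m lam q a psi ->
  rho psi y = 2 * a * RInt (Gd m lam q a psi) 0 y.
Proof.
  intros H. unfold rho. rewrite (exp_psi_eq m lam q a psi y H). unfold Avk.
  rewrite <- (subst_lin (Gd m lam q a psi) y) by (intros; apply Gd_cont; auto).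
  rewrite (RInt_ext (fun t => 1 * Gd m lam q a psi (y * t)) (fun t => Gd m lam q a psi (y * t))).
  ring. intros; apply Rmult_1_l.
Qed.

Lemma rho_deriv m lam q a psi y : FP m lam q a psi ->
  is_derive (rho psi) y (2 * a * Gd m lam q a psi y).
Proof.
  intros H. apply dext with (fun y => 2 * a * RInt (Gd m lam q a psi) 0 y).
  intros t; symmetry; apply rho_eq; auto.
  apply dscal. apply ftc0. intros; apply Gd_cont; auto.
Qed.

Lemma rho_cont psi y : contf psi -> continuity_pt (rho psi) y.
Proof.
  intros Hp. unfold rho. apply continuity_pt_mult. apply continuity_pt_id.
  apply (continuity_pt_comp psi exp). apply Hp. apply exp_cont.
Qed.

Lemma gg_cont m lam q a psi y : FP m lam q a psi -> continuity_pt (gg m lam q a psi) y.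
Proof. intros H. unfold gg. apply continuity_pt_mult. apply continuity_pt_id. apply Ed_cont; auto. Qed.

Lemma W_w m lam q a psi y : FP m lam q a psi -> -2 <= y <= 2 ->
  Wd m lam q a psi y * y ^ (S (S m)) = cc m lam a * wI m q a psi y.
Proof.
  intros H Hy. pose proof H as (Hq & Hl & Ha & Hp & Hfx).
  unfold Wd, Wf, cc, wI. rewrite clamp_id by auto. rewrite Rmult_assoc. f_equal.
  unfold Avk. rewrite <- (subst_lin (fun th => th ^ S m * Hd m q a psi th) y).
  2:{ intros x. apply (continuity_pt_mult (fun th => th ^ S m) (Hd m q a psi)). apply pow_cont. apply Hd_cont; auto. }
  replace (y ^ S (S m)) with (y * y ^ S m) by (simpl; ring).
  rewrite Rmult_comm, Rmult_assoc. f_equal.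
  assert (Hex : ex_RInt (fun t => t ^ S m * Hf (S m) q a psi (y * t)) 0 1).
  { apply ex_RInt_Avk. apply tn_cont. intros; apply Hf_cont; auto. }
  rewrite <- RInt_scal01 by auto. apply RInt_ext. intros t _.
  unfold Hd. rewrite Rpow_mult_distr, Rmult_assoc. reflexivity.
Qed.

Lemma near_nonzero y d t : 0 < Rabs y < 2 -> d = Rmin (2 - Rabs y) (Rabs y) -> Rabs (t - y) < d ->
  0 < Rabs t < 2.
Proof.
  intros Hy -> Ht. assert (H1 : Rabs (t - y) < 2 - Rabs y) by (eapply Rlt_le_trans; [exact Ht|apply Rmin_l]).
  assert (H2 : Rabs (t - y) < Rabs y) by (eapply Rlt_le_trans; [exact Ht|apply Rmin_r]).
  pose proof (Rabs_triang_inv y t). pose proof (Rabs_triang_inv t y).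
  rewrite (Rabs_minus_sym y t) in H. lra.
Qed.

Lemma W_deriv m lam q a psi y : FP m lam q a psi -> 0 < Rabs y < 2 ->
  is_derive (Wd m lam q a psi) y
    (cc m lam a * Hd m q a psi y / y - INR (S (S m)) * Wd m lam q a psi y / y).
Proof.
  intros H Hy. pose proof H as (Hq & Hl & Ha & Hp & Hfx).
  set (d := Rmin (2 - Rabs y) (Rabs y)).
  assert (Hd0 : 0 < d) by (apply Rmin_pos; lra).
  assert (Hy0 : y <> 0) by (intro E; rewrite E, Rabs_R0 in Hy; lra).
  apply (dext_loc (fun t => cc m lam a * wI m q a psi t / t ^ S (S m)) _ y _ d Hd0).
  { intros t Ht. pose proof (near_nonzero y d t Hy eq_refl Ht) as Ht2.
    assert (t <> 0) by (intro E; rewrite E, Rabs_R0 in Ht2; lra).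
    rewrite <- W_w; auto. field. apply pow_nonzero; auto. apply Rabs_le_between. lra. }
  eapply deq. apply ddiv. apply dscal. apply ftc0.
  { intros x. apply (continuity_pt_mult (fun th => th ^ S m) (Hd m q a psi)). apply pow_cont. apply Hd_cont; auto. }
  apply dpow. apply did. apply pow_nonzero; auto.
  assert (HW := W_w m lam q a psi y H ltac:(apply Rabs_le_between; lra)).
  cbv beta. rewrite <- HW. simpl pred. simpl pow. field. repeat split; auto; apply pow_nonzero; auto.
Qed.

Lemma gg_deriv m lam q a psi y : FP m lam q a psi -> 0 < Rabs y < 2 ->
  is_derive (gg m lam q a psi) y (dgg m lam q a psi y).
Proof.
  intros H Hy. pose proof H as (Hq & Hl & Ha & Hp & Hfx).
  assert (Hy0 : y <> 0) by (intro E; rewrite E, Rabs_R0 in Hy; lra).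
  assert (HW := Wd_pos m lam q a psi y H).
  assert (Hc : 0 < INR (S m + 1)) by apply INR_Sm1_pos.
  unfold gg, Ed. eapply deq. apply dmult. apply did. apply dexp.
  apply (dext (fun t => / INR (S m + 1) * ln (Wd m lam q a psi t))). intros t; unfold Rdiv; ring.
  apply dscal. apply dln. auto. apply W_deriv; auto.
  unfold dgg, Ed. replace (S m + 1)%nat with (S (S m)) in * by lia. field. lra.
Qed.


Lemma pow_lt_S x y m : 0 <= y < x -> y ^ S m < x ^ S m.
Proof.
  intros H. induction m. simpl. lra.
  change (y ^ S (S m)) with (y * y ^ S m). change (x ^ S (S m)) with (x * x ^ S m).
  assert (0 <= y ^ S m) by (apply pow_le; lra). nra.
Qed.

Lemma pow_inv_le x y m : 0 <= x -> 0 <= y -> x ^ S m <= y ^ S m -> x <= y.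
Proof. intros Hx Hy H. apply Rnot_lt_le. intros Hlt. pose proof (pow_lt_S x y m ltac:(lra)). lra. Qed.

Lemma rho_0 psi : rho psi 0 = 0.
Proof. unfold rho. ring. Qed.
Lemma gg_0 m lam q a psi : gg m lam q a psi 0 = 0.
Proof. unfold gg. ring. Qed.

Lemma rho_incr m lam q a psi x y : FP m lam q a psi -> x < y -> rho psi x < rho psi y.
Proof.
  intros H Hxy. pose proof H as (Hq & Hl & Ha & Hp & _).
  apply (smono_deriv (rho psi) (fun t => 2 * a * Gd m lam q a psi t)); auto.
  intros; apply rho_cont; auto. intros; apply rho_deriv; auto.
  intros; apply Rmult_lt_0_compat. lra. apply Gd_pos.
Qed.

Lemma rho_pos psi y : 0 < y -> 0 < rho psi y.
Proof. intros H. unfold rho. apply Rmult_lt_0_compat; auto. apply exp_pos. Qed.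

Lemma gg_pos m lam q a psi y : 0 < y -> 0 < gg m lam q a psi y.
Proof. intros H. unfold gg. apply Rmult_lt_0_compat; auto. apply Ed_pos. Qed.

Lemma dgg_nonneg m lam q a psi y : FP m lam q a psi -> 0 <= dgg m lam q a psi y.
Proof.
  intros H. pose proof H as (Hq & Hl & Ha & Hp & _). unfold dgg.
  assert (0 < cc m lam a) by (apply cW_pos; auto). pose proof (INR_Sm1_pos m).
  pose proof (Ed_pos m lam q a psi y). pose proof (Wd_pos m lam q a psi y H).
  pose proof (Hf_nonneg (S m) q a psi y). unfold Hd. unfold Rdiv.
  apply Rmult_le_pos. apply Rmult_le_pos. apply Rmult_le_pos. apply Rmult_le_pos; try lra.
  left; apply Rinv_0_lt_compat; lra. lra. auto. left; apply Rinv_0_lt_compat; lra.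
Qed.

Lemma gg_mono m lam q a psi x y : FP m lam q a psi -> 0 < x -> x <= y -> y < 2 ->
  gg m lam q a psi x <= gg m lam q a psi y.
Proof.
  intros H Hx Hxy Hy. destruct Hxy as [Hxy|<-]; [|lra].
  apply (mono_deriv _ (dgg m lam q a psi)); auto.
  intros; apply gg_cont; auto.
  intros t Ht. apply gg_deriv; auto. rewrite Rabs_right; lra.
  intros; apply dgg_nonneg; auto.
Qed.

Lemma key_identity m lam q a psi y : FP m lam q a psi ->
  INR (S m) * gg m lam q a psi y ^ m * dgg m lam q a psi y =
  INR (S m) * lam ^ S m * rho psi y ^ m * Qf q a y * (2 * a * Gd m lam q a psi y).
Proof.
  intros H.
  assert (HG : Gd m lam q a psi y = / Ed m lam q a psi y).
  { pose proof (EG m lam q a psi y). pose proof (Ed_pos m lam q a psi y).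
    apply Rmult_eq_reg_l with (Ed m lam q a psi y). rewrite H0. field. lra. lra. }
  rewrite HG. unfold dgg, gg, rho, Hd, Hf, cc, cW. rewrite <- (Ed_pow m lam q a psi y H).
  rewrite !Rpow_mult_distr. rewrite exp_pow_INR.
  replace (S m - 1)%nat with m by lia.
  pose proof (Ed_pos m lam q a psi y). pose proof (INR_Sm1_pos m).
  simpl pow. field. repeat split; try lra. apply pow_nonzero; lra.
Qed.

Lemma rho_nonneg psi y : 0 <= y -> 0 <= rho psi y.
Proof. intros H. unfold rho. apply Rmult_le_pos; auto. left; apply exp_pos. Qed.


Lemma dpowS (f : R -> R) m x l : is_derive f x l -> is_derive (fun t => f t ^ S m) x (INR (S m) * l * f x ^ m).
Proof. intros H. apply (dpow f (S m) x l H). Qed.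

Lemma Gd_gg m lam q a psi y : gg m lam q a psi y * Gd m lam q a psi y = y.
Proof. unfold gg. rewrite Rmult_assoc, EG. ring. Qed.

Lemma Qf_q q a y : qgood q -> 0 < a * (1 - y ^ 2) -> Qf q a y = q (a * (1 - y ^ 2)).
Proof. intros Hq H. unfold Qf. destruct (qq_pos q _ Hq H) as [-> _]. auto. Qed.

Lemma cont_powS f m x : continuity_pt f x -> continuity_pt (fun t => f t ^ S m) x.
Proof. intros H. apply (continuity_pt_comp f (fun t => t ^ S m)); auto. apply pow_cont. Qed.

Lemma small_a m lam q a psi : FP m lam q a psi ->
  (forall x, 0 < x <= a -> (8 / lam) ^ S m * x ^ S m <= q x) -> rho psi 1 < 1.
Proof.
  intros H Hsm. pose proof H as (Hq & Hl & Ha & Hp & Hfx).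
  set (L := rho psi 1). assert (HL : 0 < L) by (apply rho_pos; lra).
  assert (S1 : forall eta, 0 < eta < 1 -> 8 * (a * (1 - eta ^ 2)) * rho psi eta <= gg m lam q a psi eta).
  { intros eta Heta. set (X := a * (1 - eta ^ 2)).
    assert (HX : 0 < X) by (unfold X; apply Rmult_lt_0_compat; nra).
    set (K := fun t => gg m lam q a psi t ^ S m - (8 * X) ^ S m * rho psi t ^ S m).
    assert (K0 : K 0 = 0) by (unfold K; rewrite gg_0, rho_0; simpl; ring).
    assert (Kmono : K 0 <= K eta).
    { apply (mono_deriv K (fun t => INR (S m) * dgg m lam q a psi t * gg m lam q a psi t ^ m -
                                  (8 * X) ^ S m * (INR (S m) * (2 * a * Gd m lam q a psi t) * rho psi t ^ m))).
      lra.
      - intros t _. unfold K. apply continuity_pt_minus. apply cont_powS. apply gg_cont; auto.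
        apply continuity_pt_mult. apply continuity_pt_const; intros u v; auto. apply cont_powS. apply rho_cont; auto.
      - intros t Ht. unfold K. apply dminus. apply dpowS. apply gg_deriv; auto. rewrite Rabs_right; lra.
        apply dscal. apply dpowS. apply rho_deriv; auto.
      - intros t Ht.
        replace (INR (S m) * dgg m lam q a psi t * gg m lam q a psi t ^ m) with
          (INR (S m) * gg m lam q a psi t ^ m * dgg m lam q a psi t) by ring.
        rewrite key_identity by auto.
        assert (Hxt : 0 < a * (1 - t ^ 2)) by (apply Rmult_lt_0_compat; nra).
        rewrite Qf_q by auto.
        assert (Hq1 := Hsm (a * (1 - t ^ 2)) ltac:(split; nra)).
        assert (HXt : X ^ S m <= (a * (1 - t ^ 2)) ^ S m).
        { apply pow_incr. unfold X. assert (t ^ 2 <= eta ^ 2) by (simpl; nra). assert (eta ^ 2 < 1) by (simpl; nra). split; [apply Rmult_le_pos; lra| apply Rmult_le_compat_l; lra]. }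
        assert (E8 : lam ^ S m * ((8 / lam) ^ S m * (a * (1 - t ^ 2)) ^ S m) = 8 ^ S m * (a * (1 - t ^ 2)) ^ S m).
        { rewrite <- !Rpow_mult_distr. f_equal. field. lra. }
        assert (Hl1 : lam ^ S m * q (a * (1 - t ^ 2)) >= (8 * X) ^ S m).
        { rewrite Rpow_mult_distr. assert (0 < lam ^ S m) by (apply pow_lt; lra).
          assert (0 < 8 ^ S m) by (apply pow_lt; lra).
          assert (lam ^ S m * ((8 / lam) ^ S m * (a * (1 - t ^ 2)) ^ S m) <= lam ^ S m * q (a * (1 - t ^ 2)))
            by (apply Rmult_le_compat_l; lra).
          assert (8 ^ S m * X ^ S m <= 8 ^ S m * (a * (1 - t ^ 2)) ^ S m) by (apply Rmult_le_compat_l; lra).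
          lra. }
        assert (0 <= rho psi t ^ m) by (apply pow_le, rho_nonneg; lra).
        assert (0 < 2 * a * Gd m lam q a psi t) by (pose proof (Gd_pos m lam q a psi t); nra).
        assert (0 < INR (S m)) by (apply lt_0_INR; lia).
        assert (0 <= INR (S m) * rho psi t ^ m * (2 * a * Gd m lam q a psi t)) by
          (apply Rmult_le_pos; [apply Rmult_le_pos|]; lra).
        replace (INR (S m) * lam ^ S m * rho psi t ^ m * q (a * (1 - t ^ 2)) * (2 * a * Gd m lam q a psi t) -
          (8 * X) ^ S m * (INR (S m) * (2 * a * Gd m lam q a psi t) * rho psi t ^ m)) with
          ((INR (S m) * rho psi t ^ m * (2 * a * Gd m lam q a psi t)) * (lam ^ S m * q (a * (1 - t ^ 2)) - (8 * X) ^ S m)) by ring.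
        apply Rmult_le_pos; lra. }
    rewrite K0 in Kmono. unfold K in Kmono. rewrite <- Rpow_mult_distr in Kmono.
    apply pow_inv_le with m. apply Rmult_le_pos. lra. apply rho_nonneg; lra.
    left; apply gg_pos; lra.
    replace (8 * (a * (1 - eta ^ 2))) with (8 * X) by reflexivity. lra. }
  assert (S2 : forall eta, 0 < eta < 1 -> (L - rho psi eta) * gg m lam q a psi eta <= a * (1 - eta ^ 2)).
  { intros eta Heta.
    set (K := fun t => a * t ^ 2 - rho psi t * gg m lam q a psi eta).
    assert (Km : K eta <= K 1).
    { apply (mono_deriv K (fun t => a * (INR 2 * 1 * t ^ 1) - 2 * a * Gd m lam q a psi t * gg m lam q a psi eta)).
      lra.
      - intros t _. unfold K. apply continuity_pt_minus. apply continuity_pt_mult. apply continuity_pt_const; intros u v; auto.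
        apply pow_cont. apply continuity_pt_mult. apply rho_cont; auto. apply continuity_pt_const; intros u v; auto.
      - intros t Ht. unfold K. apply dminus. apply dscal. apply dpow. apply did.
        eapply deq. apply (dmult (rho psi) (fun _ => gg m lam q a psi eta) t (2 * a * Gd m lam q a psi t) 0). apply rho_deriv; auto. apply dconst. ring.
      - intros t Ht. assert (gg m lam q a psi eta <= gg m lam q a psi t) by (apply gg_mono; auto; lra).
        pose proof (Gd_gg m lam q a psi t). pose proof (Gd_pos m lam q a psi t).
        assert (Gd m lam q a psi t * gg m lam q a psi eta <= Gd m lam q a psi t * gg m lam q a psi t)
          by (apply Rmult_le_compat_l; lra).
        replace (INR 2) with 2 by (simpl; ring). simpl. nra. }
    unfold K in Km. fold L in Km. simpl in Km |- *. nra. }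
  destruct (f_interv_is_interv (rho psi) 0 1 (L / 2)) as [eta [Heta1 Heta2]]. lra.
  { rewrite rho_0. fold L. lra. }
  { intros; apply rho_cont; auto. }
  assert (Heta0 : eta <> 0) by (intro E; rewrite E, rho_0 in Heta2; lra).
  assert (Heta3 : eta <> 1) by (intro E; rewrite E in Heta2; fold L in Heta2; lra).
  assert (He : 0 < eta < 1) by lra.
  pose proof (S1 eta He). pose proof (S2 eta He). rewrite Heta2 in *.
  assert (HX : 0 < a * (1 - eta ^ 2)) by (apply Rmult_lt_0_compat; nra).
  assert (L * L <= 1 / 2).
  { assert ((L - L / 2) * (8 * (a * (1 - eta ^ 2)) * (L / 2)) <= a * (1 - eta ^ 2)).
    { eapply Rle_trans; [|exact H1]. apply Rmult_le_compat_l. lra. exact H0. }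
    nra. }
  nra.
Qed.

Lemma large_a m lam q a psi : FP m lam q a psi ->
  (forall x, 3 * a / 4 <= x <= a -> q x <= (1 / (4 * lam)) ^ S m * x ^ S m) -> 1 < rho psi 1.
Proof.
  intros H Hlg. pose proof H as (Hq & Hl & Ha & Hp & Hfx).
  assert (T1 : forall eta, 0 < eta <= 1/2 -> gg m lam q a psi eta <= a / 4 * rho psi eta).
  { intros eta Heta.
    set (K := fun t => (a / 4) ^ S m * rho psi t ^ S m - gg m lam q a psi t ^ S m).
    assert (K0 : K 0 = 0) by (unfold K; rewrite gg_0, rho_0; simpl; ring).
    assert (Kmono : K 0 <= K eta).
    { apply (mono_deriv K (fun t => (a / 4) ^ S m * (INR (S m) * (2 * a * Gd m lam q a psi t) * rho psi t ^ m)
                                   - INR (S m) * dgg m lam q a psi t * gg m lam q a psi t ^ m)).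
      lra.
      - intros t _. unfold K. apply continuity_pt_minus.
        apply continuity_pt_mult. apply continuity_pt_const; intros u v; auto. apply cont_powS. apply rho_cont; auto.
        apply cont_powS. apply gg_cont; auto.
      - intros t Ht. unfold K. apply dminus. apply dscal. apply dpowS. apply rho_deriv; auto.
        apply dpowS. apply gg_deriv; auto. rewrite Rabs_right; lra.
      - intros t Ht.
        replace (INR (S m) * dgg m lam q a psi t * gg m lam q a psi t ^ m) with
          (INR (S m) * gg m lam q a psi t ^ m * dgg m lam q a psi t) by ring.
        rewrite key_identity by auto.
        assert (Ht2 : t ^ 2 <= 1/4) by (simpl; nra).
        assert (Hxt : 3 * a / 4 <= a * (1 - t ^ 2) <= a) by (split; nra).
        assert (Hxt0 : 0 < a * (1 - t ^ 2)) by lra.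
        rewrite Qf_q by auto.
        assert (Hq1 := Hlg (a * (1 - t ^ 2)) Hxt).
        assert (HXt : (a * (1 - t ^ 2)) ^ S m <= a ^ S m) by (apply pow_incr; lra).
        assert (E8 : lam ^ S m * ((1 / (4 * lam)) ^ S m * a ^ S m) = (a / 4) ^ S m).
        { rewrite <- !Rpow_mult_distr. f_equal. field. lra. }
        assert (Hl1 : lam ^ S m * q (a * (1 - t ^ 2)) <= (a / 4) ^ S m).
        { assert (0 < lam ^ S m) by (apply pow_lt; lra).
          assert (0 < (1 / (4 * lam)) ^ S m) by (apply pow_lt; apply Rdiv_lt_0_compat; lra).
          assert (lam ^ S m * q (a * (1 - t ^ 2)) <= lam ^ S m * ((1 / (4 * lam)) ^ S m * (a * (1 - t ^ 2)) ^ S m))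
            by (apply Rmult_le_compat_l; lra).
          assert ((1 / (4 * lam)) ^ S m * (a * (1 - t ^ 2)) ^ S m <= (1 / (4 * lam)) ^ S m * a ^ S m)
            by (apply Rmult_le_compat_l; lra).
          assert (lam ^ S m * ((1 / (4 * lam)) ^ S m * (a * (1 - t ^ 2)) ^ S m) <= lam ^ S m * ((1 / (4 * lam)) ^ S m * a ^ S m))
            by (apply Rmult_le_compat_l; lra).
          lra. }
        assert (0 <= rho psi t ^ m) by (apply pow_le, rho_nonneg; lra).
        assert (0 < 2 * a * Gd m lam q a psi t) by (pose proof (Gd_pos m lam q a psi t); nra).
        assert (0 < INR (S m)) by (apply lt_0_INR; lia).
        assert (0 <= INR (S m) * rho psi t ^ m * (2 * a * Gd m lam q a psi t)) by
          (apply Rmult_le_pos; [apply Rmult_le_pos|]; lra).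
        replace ((a / 4) ^ S m * (INR (S m) * (2 * a * Gd m lam q a psi t) * rho psi t ^ m) -
          INR (S m) * lam ^ S m * rho psi t ^ m * q (a * (1 - t ^ 2)) * (2 * a * Gd m lam q a psi t)) with
          ((INR (S m) * rho psi t ^ m * (2 * a * Gd m lam q a psi t)) * ((a / 4) ^ S m - lam ^ S m * q (a * (1 - t ^ 2)))) by ring.
        apply Rmult_le_pos; lra. }
    rewrite K0 in Kmono. unfold K in Kmono. rewrite <- Rpow_mult_distr in Kmono.
    apply pow_inv_le with m. left; apply gg_pos; lra.
    apply Rmult_le_pos. lra. apply rho_nonneg; lra. lra. }
  assert (T2 : 2 <= rho psi (1/2) ^ 2).
  { set (K := fun t => rho psi t ^ 2 - 8 * t ^ 2).
    assert (Km : K 0 <= K (1/2)).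
    { apply (mono_deriv K (fun t => INR 2 * (2 * a * Gd m lam q a psi t) * rho psi t ^ 1 - 8 * (INR 2 * 1 * t ^ 1))).
      lra.
      - intros t _. unfold K. apply continuity_pt_minus. apply (cont_powS _ 1). apply rho_cont; auto.
        apply continuity_pt_mult. apply continuity_pt_const; intros u v; auto. apply pow_cont.
      - intros t Ht. unfold K. apply dminus. apply dpow. apply rho_deriv; auto. apply dscal. apply dpow. apply did.
      - intros t Ht. pose proof (T1 t ltac:(lra)). pose proof (Gd_gg m lam q a psi t). pose proof (Gd_pos m lam q a psi t).
        assert (gg m lam q a psi t * Gd m lam q a psi t <= a / 4 * rho psi t * Gd m lam q a psi t)
          by (apply Rmult_le_compat_r; lra).
        replace (INR 2) with 2 by (simpl; ring). simpl. nra. }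
    unfold K in Km. rewrite rho_0 in Km. simpl in Km |- *. lra. }
  assert (0 < rho psi (1/2)) by (apply rho_pos; lra).
  assert (rho psi (1/2) < rho psi 1) by (apply rho_incr with m lam q a; auto; lra).
  simpl in T2. nra.
Qed.


Lemma FP_psiA m lam q a : qgood q -> 0 < lam -> 0 < a -> FP m lam q a (psiA (S m) lam q a).
Proof.
  intros Hq Hl Ha. destruct (psiA_spec (S m) lam q a Hq Hl Ha) as [H1 H2].
  exact (conj Hq (conj Hl (conj Ha (conj H1 H2)))).
Qed.

Lemma choose_a m lam q : qgood q -> 0 < lam ->
  (exists d, 0 < d /\ forall x, 0 < x < d -> (8 / lam) ^ S m * x ^ S m <= q x) ->
  (exists K, forall x, K < x -> q x <= (1 / (4 * lam)) ^ S m * x ^ S m) ->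
  exists a, 0 < a /\ rho (psiA (S m) lam q a) 1 = 1.
Proof.
  intros Hq Hl [d [Hd Hsm]] [K Hlg].
  set (a1 := d / 2). set (a2 := 2 * (Rabs K + a1) + 1).
  assert (Ha1 : 0 < a1) by (unfold a1; lra).
  assert (HK := Rle_abs K). assert (HK0 := Rabs_pos K).
  assert (Ha12 : a1 < a2) by (unfold a2; lra).
  assert (F1 : psiA (S m) lam q a1 1 < 0).
  { assert (H := small_a m lam q a1 _ (FP_psiA m lam q a1 Hq Hl Ha1)).
    assert (rho (psiA (S m) lam q a1) 1 < 1).
    { apply H. intros x Hx. apply Hsm. unfold a1 in Hx. lra. }
    unfold rho in H0. rewrite Rmult_1_l in H0.
    destruct (Rlt_le_dec (psiA (S m) lam q a1 1) 0); auto.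
    exfalso. pose proof (exp_le_exp _ _ r). rewrite exp_0 in H1. lra. }
  assert (F2 : 0 < psiA (S m) lam q a2 1).
  { assert (Ha2 : 0 < a2) by lra.
    assert (H := large_a m lam q a2 _ (FP_psiA m lam q a2 Hq Hl Ha2)).
    assert (1 < rho (psiA (S m) lam q a2) 1).
    { apply H. intros x Hx. apply Hlg. unfold a2 in Hx. lra. }
    unfold rho in H0. rewrite Rmult_1_l in H0.
    destruct (Rlt_le_dec 0 (psiA (S m) lam q a2 1)); auto.
    exfalso. pose proof (exp_le_exp _ _ r). rewrite exp_0 in H1. lra. }
  destruct (IVT_interv (fun a => psiA (S m) lam q a 1) a1 a2) as [a [Ha Hz]]; auto.
  intros b Hb. apply psiA_cont_a; auto. lra.
  exists a. split. lra. unfold rho. rewrite Hz, exp_0. ring.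
Qed.


Definition einv (psi : R -> R) (r : R) : R :=
  epsilon (inhabits 0) (fun e => -2 <= e <= 2 /\ rho psi e = r).

Lemma rho_inj m lam q a psi x y : FP m lam q a psi -> rho psi x = rho psi y -> x = y.
Proof.
  intros H E. destruct (Rtotal_order x y) as [Hl|[Hl|Hl]]; auto.
  pose proof (rho_incr m lam q a psi x y H Hl). lra.
  pose proof (rho_incr m lam q a psi y x H Hl). lra.
Qed.

Lemma einv_spec m lam q a psi r : FP m lam q a psi -> rho psi (-2) <= r <= rho psi 2 ->
  -2 <= einv psi r <= 2 /\ rho psi (einv psi r) = r.
Proof.
  intros H Hr. pose proof H as (Hq & Hl & Ha & Hp & _). unfold einv. apply epsilon_spec.
  destruct (f_interv_is_interv (rho psi) (-2) 2 r) as [e [He1 He2]]. lra. auto.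
  intros; apply rho_cont; auto. exists e; auto.
Qed.

Lemma rho_le m lam q a psi x y : FP m lam q a psi -> x <= y -> rho psi x <= rho psi y.
Proof.
  intros H [Hl|<-]. left; apply rho_incr with m lam q a; auto. lra.
Qed.

Lemma einv_rho m lam q a psi x : FP m lam q a psi -> -2 <= x <= 2 -> einv psi (rho psi x) = x.
Proof.
  intros H Hx. assert (Hr : rho psi (-2) <= rho psi x <= rho psi 2).
  { split; apply (rho_le m lam q a psi); auto; lra. }
  destruct (einv_spec m lam q a psi _ H Hr) as [H1 H2]. apply (rho_inj m lam q a psi); auto.
Qed.

Lemma einv_cont m lam q a psi r : FP m lam q a psi -> rho psi (-2) < r < rho psi 2 ->
  continuity_pt (einv psi) r.
Proof.
  intros H Hr. pose proof H as (Hq & Hl & Ha & Hp & _).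
  apply (continuity_pt_recip_interv (rho psi) (einv psi) (-2) 2); auto. lra.
  - intros x y _ Hxy _. apply rho_incr with m lam q a; auto.
  - intros x H1 H2. unfold comp, id. apply (einv_spec m lam q a psi x H); lra.
  - intros x H1 H2. apply (einv_spec m lam q a psi x H); lra.
  - intros; apply rho_cont; auto.
Qed.

Lemma einv_deriv m lam q a psi r : FP m lam q a psi -> rho psi (-2) < r < rho psi 2 ->
  is_derive (einv psi) r (1 / (2 * a * Gd m lam q a psi (einv psi r))).
Proof.
  intros H Hr. pose proof H as (Hq & Hl & Ha & Hp & _).
  assert (E1 : einv psi (rho psi (-2)) = -2) by (apply (einv_rho m lam q a psi); auto; lra).
  assert (E2 : einv psi (rho psi 2) = 2) by (apply (einv_rho m lam q a psi); auto; lra).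
  set (Prf := fun (x : R) (_ : einv psi (rho psi (-2)) <= x <= einv psi (rho psi 2)) =>
     exist (fun l => derivable_pt_lim (rho psi) x l) (2 * a * Gd m lam q a psi x)
       (to_dpl _ _ _ (rho_deriv m lam q a psi x H))).
  assert (Hsp := einv_spec m lam q a psi r H ltac:(lra)).
  assert (Pinc : einv psi (rho psi (-2)) <= einv psi r <= einv psi (rho psi 2)) by (rewrite E1, E2; lra).
  apply from_dpl.
  assert (D := derivable_pt_lim_recip_interv (rho psi) (einv psi) (rho psi (-2)) (rho psi 2) r Prf
     (einv_cont m lam q a psi r H Hr) ltac:(lra) Hr Pinc).
  simpl in D. apply D.
  - intros x Hx. unfold comp, id. apply (einv_spec m lam q a psi x H); lra.
  - pose proof (Gd_pos m lam q a psi (einv psi r)). nra.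
Qed.

Definition vv a psi r := a * (1 - einv psi r ^ 2).
Definition v1f m lam q a psi r := - gg m lam q a psi (einv psi r).
Definition v2f m lam q a psi r :=
  - (dgg m lam q a psi (einv psi r) / (2 * a * Gd m lam q a psi (einv psi r))).

Lemma dgg_cont m lam q a psi y : FP m lam q a psi -> continuity_pt (dgg m lam q a psi) y.
Proof.
  intros H. pose proof H as (Hq & Hl & Ha & Hp & _). unfold dgg.
  apply continuity_pt_div. apply continuity_pt_mult. apply continuity_pt_mult.
  apply continuity_pt_const; intros u v; auto. apply Ed_cont; auto. apply Hd_cont; auto.
  apply Wd_cont; auto. apply Rgt_not_eq, Wd_pos; auto.
Qed.

Lemma v2f_cont m lam q a psi r : FP m lam q a psi -> rho psi (-2) < r < rho psi 2 ->
  continuity_pt (v2f m lam q a psi) r.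
Proof.
  intros H Hr. pose proof H as (Hq & Hl & Ha & Hp & _). unfold v2f.
  apply continuity_pt_opp.
  apply (continuity_pt_comp (einv psi) (fun e => dgg m lam q a psi e / (2 * a * Gd m lam q a psi e))).
  apply einv_cont with m lam q a; auto.
  apply continuity_pt_div. apply dgg_cont; auto. apply continuity_pt_mult.
  apply continuity_pt_const; intros u v; auto. apply Gd_cont; auto.
  pose proof (Gd_pos m lam q a psi (einv psi r)). nra.
Qed.

Lemma v1f_cont m lam q a psi r : FP m lam q a psi -> rho psi (-2) < r < rho psi 2 ->
  continuity_pt (v1f m lam q a psi) r.
Proof.
  intros H Hr. unfold v1f. apply continuity_pt_opp.
  apply (continuity_pt_comp (einv psi) (gg m lam q a psi)).
  apply einv_cont with m lam q a; auto. apply gg_cont; auto.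
Qed.

Lemma vv_deriv m lam q a psi r : FP m lam q a psi -> rho psi (-2) < r < rho psi 2 ->
  is_derive (vv a psi) r (v1f m lam q a psi r).
Proof.
  intros H Hr. pose proof H as (Hq & Hl & Ha & Hp & _). unfold vv, v1f, gg.
  eapply deq. apply dscal. apply dminus. apply dconst. apply dpow. apply (einv_deriv m lam q a psi r H Hr).
  pose proof (EG m lam q a psi (einv psi r)). pose proof (Gd_pos m lam q a psi (einv psi r)).
  simpl pred. simpl INR.
  replace (Ed m lam q a psi (einv psi r)) with (/ Gd m lam q a psi (einv psi r)).
  field. split; lra.
  apply Rmult_eq_reg_r with (Gd m lam q a psi (einv psi r)). rewrite H0. field. lra. lra.
Qed.

Lemma einv_ne0 m lam q a psi r : FP m lam q a psi -> rho psi (-2) < r < rho psi 2 -> r <> 0 ->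
  0 < Rabs (einv psi r) < 2.
Proof.
  intros H Hr Hr0. destruct (einv_spec m lam q a psi r H ltac:(lra)) as [H1 H2].
  assert (einv psi r <> 0) by (intro E; rewrite E, rho_0 in H2; lra).
  assert (einv psi r <> 2) by (intro E; rewrite E in H2; lra).
  assert (einv psi r <> -2) by (intro E; rewrite E in H2; lra).
  split. apply Rabs_pos_lt; auto. apply Rabs_def1; lra.
Qed.

Lemma v1f_deriv_ne m lam q a psi r : FP m lam q a psi -> rho psi (-2) < r < rho psi 2 -> r <> 0 ->
  is_derive (v1f m lam q a psi) r (v2f m lam q a psi r).
Proof.
  intros H Hr Hr0. pose proof H as (Hq & Hl & Ha & Hp & _). unfold v1f, v2f.
  apply (dext (fun r => -1 * gg m lam q a psi (einv psi r))). intros; ring.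
  eapply deq. apply (dscal (fun r => gg m lam q a psi (einv psi r)) r (-1)).
  apply dcomp. apply gg_deriv; auto. apply (einv_ne0 m lam q a psi r H Hr Hr0).
  apply (einv_deriv m lam q a psi r H Hr).
  pose proof (Gd_pos m lam q a psi (einv psi r)). field. lra.
Qed.

Lemma einv_0 m lam q a psi : FP m lam q a psi -> einv psi 0 = 0.
Proof. intros H. rewrite <- (rho_0 psi) at 1. apply (einv_rho m lam q a psi); auto; lra. Qed.

Lemma rho_m2 m lam q a psi : FP m lam q a psi -> rho psi (-2) < 0.
Proof. intros H. rewrite <- (rho_0 psi). apply (rho_incr m lam q a psi); auto; lra. Qed.

Lemma v1f_deriv_0 m lam q a psi : FP m lam q a psi -> 0 < rho psi 2 ->
  is_derive (v1f m lam q a psi) 0 (v2f m lam q a psi 0).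
Proof.
  intros H H2. pose proof (rho_m2 m lam q a psi H) as Hm.
  apply (deriv_from_near _ _ 0 (Rmin (- rho psi (-2)) (rho psi 2))).
  apply Rmin_pos; lra.
  apply v1f_cont; auto; lra.
  intros x Hx. rewrite Rminus_0_r in Hx.
  assert (Hx1 : Rabs x < - rho psi (-2)) by (eapply Rlt_le_trans; [apply Hx| apply Rmin_l]).
  assert (Hx2 : Rabs x < rho psi 2) by (eapply Rlt_le_trans; [apply Hx| apply Rmin_r]).
  apply Rabs_def2 in Hx1. apply Rabs_def2 in Hx2.
  apply v1f_deriv_ne; auto. lra. intro E; rewrite E, Rabs_R0 in Hx; lra.
  apply v2f_cont; auto; lra.
Qed.

Lemma einv_01 m lam q a psi r : FP m lam q a psi -> rho psi 1 = 1 -> 0 < r < 1 -> 0 < einv psi r < 1.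
Proof.
  intros H H1 Hr. assert (H2 : 1 < rho psi 2) by (rewrite <- H1; apply (rho_incr m lam q a psi); auto; lra).
  pose proof (rho_m2 m lam q a psi H).
  destruct (einv_spec m lam q a psi r H ltac:(lra)) as [E1 E2].
  split.
  - destruct (Rlt_le_dec 0 (einv psi r)) as [h|h]; auto.
    pose proof (rho_le m lam q a psi _ _ H h). rewrite rho_0 in H3. lra.
  - destruct (Rlt_le_dec (einv psi r) 1) as [h|h]; auto.
    pose proof (rho_le m lam q a psi _ _ H h). lra.
Qed.

Lemma construct m lam q a psi : FP m lam q a psi -> rho psi 1 = 1 ->
  C2_on01 (vv a psi) (v1f m lam q a psi) (v2f m lam q a psi) /\
  v1f m lam q a psi 0 = 0 /\ vv a psi 1 = 0 /\
  (forall r, 0 < r < 1 -> derivable_pt_lim (fun s => (- v1f m lam q a psi s) ^ (S m)) r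
       (lam ^ (S m) * INR (S m) * r ^ m * q (vv a psi r))) /\
  (forall r, 0 < r < 1 -> 0 < vv a psi r) /\
  (forall r, 0 < r < 1 -> v2f m lam q a psi r < 0).
Proof.
  intros H H1. pose proof H as (Hq & Hl & Ha & Hp & _).
  assert (H2 : 1 < rho psi 2) by (rewrite <- H1; apply (rho_incr m lam q a psi); auto; lra).
  pose proof (rho_m2 m lam q a psi H) as Hm2.
  assert (He1 : einv psi 1 = 1) by (rewrite <- H1 at 1; apply (einv_rho m lam q a psi); auto; lra).
  assert (He0 := einv_0 m lam q a psi H).
  assert (Hin : forall r, 0 <= r <= 1 -> rho psi (-2) < r < rho psi 2) by (intros; lra).
  split; [|split; [|split; [|split; [|split]]]].
  - split; [|split].
    + intros r Hr. apply to_dpl. apply vv_deriv; auto.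
    + intros r Hr. apply to_dpl. destruct (Req_dec r 0) as [->|Hr0].
      apply v1f_deriv_0; auto; lra. apply v1f_deriv_ne; auto.
    + intros r Hr eps Heps. destruct (cont_pt_elim _ r (v2f_cont m lam q a psi r H (Hin r Hr)) eps Heps) as [d [Hd Hx]].
      exists d; split; auto.
  - unfold v1f. rewrite He0, gg_0. ring.
  - unfold vv. rewrite He1. ring.
  - intros r Hr. apply to_dpl.
    destruct (einv_01 m lam q a psi r H H1 Hr) as [Ee1 Ee2].
    destruct (einv_spec m lam q a psi r H ltac:(lra)) as [_ Erho].
    apply (dext (fun s => (-1 * v1f m lam q a psi s) ^ S m)). intros; f_equal; ring.
    eapply deq. apply dpowS. apply dscal. apply v1f_deriv_ne; auto. lra. lra.
    unfold v1f, v2f.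
    assert (KI := key_identity m lam q a psi (einv psi r) H).
    rewrite Erho in KI. rewrite Qf_q in KI by (auto; apply Rmult_lt_0_compat; nra).
    unfold vv. pose proof (Gd_pos m lam q a psi (einv psi r)).
    replace (-1 * - gg m lam q a psi (einv psi r)) with (gg m lam q a psi (einv psi r)) by ring.
    apply Rmult_eq_reg_r with (2 * a * Gd m lam q a psi (einv psi r)). 2: nra.
    replace (INR (S m) * (-1 * - (dgg m lam q a psi (einv psi r) / (2 * a * Gd m lam q a psi (einv psi r)))) *
       gg m lam q a psi (einv psi r) ^ m * (2 * a * Gd m lam q a psi (einv psi r))) with
      (INR (S m) * gg m lam q a psi (einv psi r) ^ m * dgg m lam q a psi (einv psi r)) by (field; nra).
    rewrite KI. ring.
  - intros r Hr. destruct (einv_01 m lam q a psi r H H1 Hr). unfold vv. apply Rmult_lt_0_compat; auto. nra.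
  - intros r Hr. destruct (einv_01 m lam q a psi r H H1 Hr). unfold v2f.
    assert (0 < dgg m lam q a psi (einv psi r)).
    { unfold dgg, Hd, Hf. rewrite Qf_q by (auto; apply Rmult_lt_0_compat; nra).
      assert (0 < q (a * (1 - einv psi r ^ 2))) by (apply Hq; apply Rmult_lt_0_compat; nra).
      assert (0 < cc m lam a) by (apply cW_pos; auto). pose proof (INR_Sm1_pos m).
      pose proof (Ed_pos m lam q a psi (einv psi r)). pose proof (Wd_pos m lam q a psi (einv psi r) H).
      pose proof (exp_pos (INR (S m - 1) * psi (einv psi r))).
      unfold Rdiv. apply Rmult_lt_0_compat. apply Rmult_lt_0_compat. apply Rmult_lt_0_compat.
      apply Rmult_lt_0_compat; auto. apply Rinv_0_lt_compat; auto. auto. apply Rmult_lt_0_compat; auto.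
      apply Rinv_0_lt_compat; auto. }
    pose proof (Gd_pos m lam q a psi (einv psi r)).
    assert (0 < dgg m lam q a psi (einv psi r) / (2 * a * Gd m lam q a psi (einv psi r))).
    { apply Rdiv_lt_0_compat; auto. nra. }
    lra.
Qed.


Lemma concave_aux v v1 v2 : C2_on01 v v1 v2 -> (forall r, 0 < r < 1 -> v2 r < 0) ->
  forall x y s, 0 < x -> x < y -> y < 1 -> 0 < s < 1 ->
    v (s * x + (1 - s) * y) > s * v x + (1 - s) * v y.
Proof.
  intros [D1 [D2 _]] Hneg x y s Hx Hxy Hy Hs.
  set (z := s * x + (1 - s) * y).
  assert (Hz : x < z < y) by (unfold z; split; nra).
  assert (Cv : forall t, 0 <= t <= 1 -> continuity_pt v t).
  { intros t Ht. apply derivable_continuous_pt. exists (v1 t). apply D1; auto. }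
  destruct (MVT_open v v1 x z ltac:(lra)) as [c1 [Hc1 E1]].
  { intros; apply Cv; lra. } { intros t Ht; apply from_dpl, D1; lra. }
  destruct (MVT_open v v1 z y ltac:(lra)) as [c2 [Hc2 E2]].
  { intros; apply Cv; lra. } { intros t Ht; apply from_dpl, D1; lra. }
  assert (Hdec : v1 c2 < v1 c1).
  { assert (- v1 c1 < - v1 c2).
    { apply (smono_deriv (fun t => - v1 t) (fun t => - v2 t)). lra.
      - intros t Ht. apply continuity_pt_opp. apply derivable_continuous_pt. exists (v2 t). apply D2; lra.
      - intros t Ht. apply (dext (fun t => -1 * v1 t)). intros; ring.
        eapply deq. apply dscal. apply from_dpl, D2. lra. ring.
      - intros t Ht. pose proof (Hneg t ltac:(lra)). lra. }
    lra. }
  assert (Ezx : z - x = (1 - s) * (y - x)) by (unfold z; ring).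
  assert (Eyz : y - z = s * (y - x)) by (unfold z; ring).
  rewrite Ezx in E1. rewrite Eyz in E2.
  assert (s * (v z - v x) > (1 - s) * (v y - v z)).
  { rewrite E1, E2. assert (0 < s * (1 - s) * (y - x)) by (apply Rmult_lt_0_compat; nra). nra. }
  lra.
Qed.

Lemma strict_concave_from v v1 v2 : C2_on01 v v1 v2 -> (forall r, 0 < r < 1 -> v2 r < 0) ->
  strictly_concave_01 v.
Proof.
  intros HC Hn x y t Hx Hy Hne Ht.
  destruct (Rlt_le_dec x y) as [Hl|Hl].
  - apply (concave_aux v v1 v2 HC Hn); lra.
  - assert (y < x) by lra.
    replace (t * x + (1 - t) * y) with ((1 - t) * y + (1 - (1 - t)) * x) by ring.
    replace (t * v x + (1 - t) * v y) with ((1 - t) * v y + (1 - (1 - t)) * v x) by ring.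
    apply (concave_aux v v1 v2 HC Hn); lra.
Qed.


Lemma exists_v m lam q : qgood q -> 0 < lam ->
  (exists d, 0 < d /\ forall x, 0 < x < d -> (8 / lam) ^ S m * x ^ S m <= q x) ->
  (exists K, forall x, K < x -> q x <= (1 / (4 * lam)) ^ S m * x ^ S m) ->
  exists v v1 v2, C2_on01 v v1 v2 /\ v1 0 = 0 /\ v 1 = 0 /\
  (forall r, 0 < r < 1 -> derivable_pt_lim (fun s => (- v1 s) ^ (S m)) r
       (lam ^ (S m) * INR (S m) * r ^ m * q (v r))) /\
  (forall r, 0 < r < 1 -> 0 < v r) /\ (forall r, 0 < r < 1 -> v2 r < 0).
Proof.
  intros Hq Hl Hs Hb. destruct (choose_a m lam q Hq Hl Hs Hb) as [a [Ha H1]].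
  pose proof (FP_psiA m lam q a Hq Hl Ha) as HF.
  destruct (construct m lam q a _ HF H1) as (C & A & B & D & E & F).
  exists (vv a (psiA (S m) lam q a)), (v1f m lam q a (psiA (S m) lam q a)), (v2f m lam q a (psiA (S m) lam q a)).
  repeat split; auto; apply C.
Qed.

Lemma pow_m1_sq N : (-1) ^ N * (-1) ^ N = 1.
Proof. rewrite <- Rpow_mult_distr. replace (-1 * -1) with 1 by ring. apply pow1. Qed.

Lemma pow_opp x N : (- x) ^ N = (-1) ^ N * x ^ N.
Proof. rewrite <- Rpow_mult_distr. f_equal. ring. Qed.

Theorem theorem4p7 (N : nat) (f : R -> R) :
  (1 <= N)%nat ->
  cond_f1 N f -> f0_infinite N f -> finf_zero N f ->
  forall lam : R, 0 < lam ->
    exists up um : R -> R,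
      solves_MO N f lam up /\ solves_MO N f lam um /\
      (forall r, 0 < r < 1 -> up r > 0) /\ strictly_concave_01 up /\
      (forall r, 0 < r < 1 -> um r < 0) /\ strictly_convex_01 um.
Proof.
  intros HN [Hfc Hfs] H0 Hinf lam Hl.
  destruct N as [|m]. lia. clear HN.
  set (q1 := fun x => (-1) ^ S m * f (- x)).
  set (q2 := fun x => f x).
  assert (Hxn : forall x, 0 < x -> 0 < x ^ S m) by (intros; apply pow_lt; auto).
  assert (Hq1r : forall x, x <> 0 -> q1 x / x ^ S m = f (- x) / (- x) ^ S m).
  { intros x Hx. unfold q1. rewrite pow_opp.
    assert ((-1) ^ S m <> 0) by (apply pow_nonzero; lra).
    assert (x ^ S m <> 0) by (apply pow_nonzero; auto).
    pose proof (pow_m1_sq (S m)) as Hsq.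
    transitivity ((-1) ^ S m * (-1) ^ S m * f (- x) / ((-1) ^ S m * x ^ S m)).
    field; split; auto. rewrite Hsq, Rmult_1_l. reflexivity. }
  assert (G1 : qgood q1).
  { split.
    - intros x. unfold q1. apply continuity_pt_mult. apply continuity_pt_const; intros u v; auto.
      apply (continuity_pt_comp (fun x => - x) f). apply continuity_pt_opp, continuity_pt_id. apply Hfc.
    - intros x Hx. specialize (Hfs (- x) ltac:(lra)). rewrite pow_opp in Hfs. unfold q1.
      pose proof (Hxn x Hx). nra. }
  assert (G2 : qgood q2).
  { split. intros x. apply Hfc. intros x Hx. specialize (Hfs x ltac:(lra)). pose proof (Hxn x Hx). unfold q2. nra. }
  assert (S1 : exists d, 0 < d /\ forall x, 0 < x < d -> (8 / lam) ^ S m * x ^ S m <= q1 x).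
  { destruct (H0 ((8 / lam) ^ S m)) as [d [Hd Hd2]]. exists d. split; auto. intros x Hx.
    specialize (Hd2 (- x) ltac:(lra) ltac:(rewrite Rabs_Ropp, Rabs_right; lra)).
    rewrite <- Hq1r in Hd2 by lra. pose proof (Hxn x ltac:(lra)).
    apply Rmult_le_reg_r with (/ x ^ S m). apply Rinv_0_lt_compat; auto.
    rewrite Rmult_assoc, Rinv_r by lra. unfold Rdiv in Hd2. lra. }
  assert (S2 : exists d, 0 < d /\ forall x, 0 < x < d -> (8 / lam) ^ S m * x ^ S m <= q2 x).
  { destruct (H0 ((8 / lam) ^ S m)) as [d [Hd Hd2]]. exists d. split; auto. intros x Hx.
    specialize (Hd2 x ltac:(lra) ltac:(rewrite Rabs_right; lra)). pose proof (Hxn x ltac:(lra)).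
    apply Rmult_le_reg_r with (/ x ^ S m). apply Rinv_0_lt_compat; auto.
    rewrite Rmult_assoc, Rinv_r by lra. unfold Rdiv in Hd2. unfold q2. lra. }
  assert (Heps : 0 < (1 / (4 * lam)) ^ S m) by (apply pow_lt; apply Rdiv_lt_0_compat; lra).
  destruct (Hinf _ Heps) as [K HK].
  assert (B1 : exists K, forall x, K < x -> q1 x <= (1 / (4 * lam)) ^ S m * x ^ S m).
  { exists (Rabs K). intros x Hx. pose proof (Rle_abs K). pose proof (Rabs_pos K).
    specialize (HK (- x) ltac:(rewrite Rabs_Ropp, Rabs_right; lra)).
    rewrite <- Hq1r in HK by lra. pose proof (Hxn x ltac:(lra)).
    apply Rabs_def2 in HK.
    apply Rmult_le_reg_r with (/ x ^ S m). apply Rinv_0_lt_compat; auto.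
    rewrite Rmult_assoc, Rinv_r by lra. unfold Rdiv in HK. lra. }
  assert (B2 : exists K, forall x, K < x -> q2 x <= (1 / (4 * lam)) ^ S m * x ^ S m).
  { exists (Rabs K). intros x Hx. pose proof (Rle_abs K). pose proof (Rabs_pos K).
    specialize (HK x ltac:(rewrite Rabs_right; lra)). pose proof (Hxn x ltac:(lra)).
    apply Rabs_def2 in HK.
    apply Rmult_le_reg_r with (/ x ^ S m). apply Rinv_0_lt_compat; auto.
    rewrite Rmult_assoc, Rinv_r by lra. unfold Rdiv in HK. unfold q2. lra. }
  destruct (exists_v m lam q1 G1 Hl S1 B1) as (v & v1 & v2 & C & A & B & D & E & F).
  destruct (exists_v m lam q2 G2 Hl S2 B2) as (w & w1 & w2 & C' & A' & B' & D' & E' & F').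
  exists v, (fun r => - w r). split; [|split; [|split; [|split; [|split]]]].
  - exists v1, v2. split; auto. split; [|split; auto].
    intros r Hr. replace (S m - 1)%nat with m by lia.
    apply to_dpl. apply (dext (fun s => (-1) ^ S m * (- v1 s) ^ S m)).
    { intros s. rewrite <- Rpow_mult_distr. f_equal. ring. }
    eapply deq. apply dscal. apply from_dpl. apply D; auto.
    unfold q1. pose proof (pow_m1_sq (S m)).
    replace ((-1) ^ S m * (lam ^ S m * INR (S m) * r ^ m * ((-1) ^ S m * f (- v r)))) with
      (((-1) ^ S m * (-1) ^ S m) * (lam ^ S m * INR (S m) * r ^ m * f (- v r))) by ring.
    rewrite H, Rmult_1_l. reflexivity.
  - exists (fun r => - w1 r), (fun r => - w2 r). destruct C' as [C1 [C2 C3]].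
    split; [split; [|split]|split; [|split]].
    + intros r Hr. apply derivable_pt_lim_opp. auto.
    + intros r Hr. apply derivable_pt_lim_opp. auto.
    + intros r Hr eps He. destruct (C3 r Hr eps He) as [d [Hd Hx]]. exists d; split; auto.
      intros s Hs Hs2. replace (- w2 s - - w2 r) with (- (w2 s - w2 r)) by ring. rewrite Rabs_Ropp. auto.
    + intros r Hr. replace (S m - 1)%nat with m by lia. rewrite Ropp_involutive. apply D'; auto.
    + rewrite A'. ring.
    + rewrite B'. ring.
  - intros r Hr. apply E; auto.
  - apply (strict_concave_from v v1 v2); auto.
  - intros r Hr. pose proof (E' r Hr). lra.
  - intros x y t Hx Hy Hne Ht.
    pose proof (strict_concave_from w w1 w2 C' F' x y t Hx Hy Hne Ht). lra.
Qed.
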